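(* Let $0\le\underline{\tau}<\overline{\tau}<\infty$, $\gamma\ge0$, $\delta\ge0$, let $f$ be a piecewise continuous probability density supported on $[\underline{\tau},\overline{\tau}]$, and let $\beta:[0,\infty)\to(0,\infty)$ be continuous and decreasing with $\lim_{x\to+\infty}\beta(x)=0$ and $x\mapsto x\beta(x)$ Lipschitz. Consider the system $$x'(t)=-\big(\delta+\beta(x(t))\big)x(t)+2\int_{\underline{\tau}}^{\overline{\tau}}e^{-\gamma\tau}f(\tau)\beta(x(t-\tau))x(t-\tau)\,d\tau,$$ $$y'(t)=-\gamma y(t)+\beta(x(t))x(t)-\int_{\underline{\tau}}^{\overline{\tau}}e^{-\gamma\tau}f(\tau)\beta(x(t-\tau))x(t-\tau)\,d\tau,$$ with nonnegative continuous initial data, whose trivial equilibrium is $E_0=(0,0)$. Then $E_0$ is globally asymptotically stable if $$\left(2\int_{\underline{\tau}}^{\overline{\tau}}e^{-\gamma\tau}f(\tau)d\tau-1\right)\beta(0)<\delta,$$ and unstable if $$\delta<\left(2\int_{\underline{\tau}}^{\overline{\tau}}e^{-\gamma\tau}f(\tau)d\tau-1\right)\beta(0).$$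
   Context: The system describes the total resting population $x$ and proliferating population $y$ of hematopoietic stem cells; for solutions arising from the model, $y(t)=\int_{\underline{\tau}}^{\overline{\tau}}f(\tau)\int_{t-\tau}^{t}e^{-\gamma(t-s)}\beta(x(s))x(s)\,ds\,d\tau$ for $t\ge\overline{\tau}$, so $y$ is determined by the history of $x$. Global asymptotic stability is understood with respect to nonnegative continuous initial functions. *)

(* Defs.v *)
From Stdlib Require Import Reals Lra List.
From Coquelicot Require Import Coquelicot.
Open Scope R_scope.

Definition piecewise_continuous (f : R -> R) (a b : R) : Prop :=
  exists l : list R,
    (2 <= length l)%nat /\
    nth 0 l 0 = a /\ last l 0 = b /\
    (forall i, (S i < length l)%nat -> nth i l 0 < nth (S i) l 0) /\
    (forall i, (S i < length l)%nat ->
       (forall t, nth i l 0 < t < nth (S i) l 0 -> continuous f t) /\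
       (exists la, filterlim f (at_right (nth i l 0)) (locally la)) /\
       (exists lb, filterlim f (at_left (nth (S i) l 0)) (locally lb))).

Definition pc_density (f : R -> R) (tl tu : R) : Prop :=
  piecewise_continuous f tl tu /\
  (forall s, 0 <= f s) /\
  (forall s, s < tl \/ tu < s -> f s = 0) /\
  RInt f tl tu = 1.

Definition delayed_term (tl tu g : R) (f beta x : R -> R) (t : R) : R :=
  RInt (fun s => exp (- g * s) * f s * (beta (x (t - s)) * x (t - s))) tl tu.

Definition y_formula (tl tu g : R) (f beta x : R -> R) (t : R) : R :=
  RInt (fun s => f s * RInt (fun r => exp (- g * (t - r)) * (beta (x r) * x r)) (t - s) t)
       tl tu.

(* (x, y) is a solution of the model with nonnegative continuous initial data
   (x, y restricted to [-tu, 0]), defined on [-tu, +oo). *)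
Definition is_solution (tl tu g d : R) (f beta x y : R -> R) : Prop :=
  (forall t, - tu <= t -> 0 <= x t) /\
  (forall t, - tu <= t <= 0 -> 0 <= y t) /\
  (forall t, - tu <= t ->
     filterlim x (within (fun s => - tu <= s) (locally t)) (locally (x t))) /\
  (forall t, - tu <= t ->
     filterlim y (within (fun s => - tu <= s) (locally t)) (locally (y t))) /\
  (forall t, 0 < t ->
     is_derive x t (- (d + beta (x t)) * x t + 2 * delayed_term tl tu g f beta x t)) /\
  (forall t, 0 < t ->
     is_derive y t (- g * y t + beta (x t) * x t - delayed_term tl tu g f beta x t)) /\
  (* solutions arising from the model: y is determined by the history of x *)
  (forall t, tu <= t -> y t = y_formula tl tu g f beta x t).

Definition E0_stable (tl tu g d : R) (f beta : R -> R) : Prop :=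
  forall eps, 0 < eps -> exists eta, 0 < eta /\
    forall x y, is_solution tl tu g d f beta x y ->
      (forall s, - tu <= s <= 0 -> Rabs (x s) < eta /\ Rabs (y s) < eta) ->
      forall t, 0 <= t -> Rabs (x t) < eps /\ Rabs (y t) < eps.

Definition E0_attractive (tl tu g d : R) (f beta : R -> R) : Prop :=
  forall x y, is_solution tl tu g d f beta x y ->
    is_lim x p_infty 0 /\ is_lim y p_infty 0.

Definition E0_GAS (tl tu g d : R) (f beta : R -> R) : Prop :=
  E0_stable tl tu g d f beta /\ E0_attractive tl tu g d f beta.

Definition E0_unstable (tl tu g d : R) (f beta : R -> R) : Prop :=
  ~ E0_stable tl tu g d f beta.

(* Main.v *)
Require Import Defs.
From Stdlib Require Import Reals.
From Coquelicot Require Import Coquelicot.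
From Stdlib Require Import Lra Lia List Factorial.
Open Scope R_scope.

Lemma ballR (x e y : R) : ball x e y <-> Rabs (y - x) < e.
Proof. unfold ball; simpl; unfold AbsRing_ball, abs, minus, plus, opp; simpl. unfold Rminus. tauto. Qed.

Lemma lip1_cont (h : R -> R) t : (forall u, Rabs (h u - h t) <= Rabs (u - t)) -> continuous h t.
Proof.
  intros H. apply filterlim_locally. intros eps. exists eps. intros y Hy.
  pose proof (proj1 (ballR _ _ _) Hy) as Hy2; apply ballR. specialize (H y). lra.
Qed.

Lemma Rmax_lip a u t : Rabs (Rmax u a - Rmax t a) <= Rabs (u - t).
Proof. unfold Rmax; destruct (Rle_dec u a); destruct (Rle_dec t a); unfold Rabs; repeat destruct Rcase_abs; lra. Qed.

Lemma cR_mult (f g : R -> R) x : continuous f x -> continuous g x -> continuous (fun y => f y * g y) x.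
Proof. intros; apply (continuous_mult f g); auto. Qed.
Lemma cR_plus (f g : R -> R) x : continuous f x -> continuous g x -> continuous (fun y => f y + g y) x.
Proof. intros; apply (continuous_plus f g); auto. Qed.
Lemma cR_opp (f : R -> R) x : continuous f x -> continuous (fun y => - f y) x.
Proof. intros; apply (continuous_opp f); auto. Qed.
Lemma cR_minus (f g : R -> R) x : continuous f x -> continuous g x -> continuous (fun y => f y - g y) x.
Proof. intros; apply (continuous_minus f g); auto. Qed.
Lemma cR_comp (f g : R -> R) x : continuous f x -> continuous g (f x) -> continuous (fun y => g (f y)) x.
Proof. intros; apply (continuous_comp f g); auto. Qed.
Lemma cR_const (c x : R) : continuous (fun _ : R => c) x.
Proof. apply continuous_const. Qed.
Lemma cR_id (x : R) : continuous (fun y : R => y) x.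
Proof. apply continuous_id. Qed.
Lemma cR_exp x : continuous exp x.
Proof. apply continuity_pt_filterlim. apply derivable_continuous_pt. apply derivable_pt_exp. Qed.
Lemma cR_Rmax a x : continuous (fun t => Rmax t a) x.
Proof. apply lip1_cont. intros; apply Rmax_lip. Qed.
Lemma cR_Rabs x : continuous Rabs x.
Proof. apply lip1_cont. intros. apply Rabs_triang_inv2. Qed.
Lemma exR_cont (f : R -> R) a b : (forall z, Rmin a b <= z <= Rmax a b -> continuous f z) -> ex_RInt f a b.
Proof. intros H. exact (@ex_RInt_continuous R_CompleteNormedModule f a b H). Qed.
Ltac req := match goal with |- @eq _ ?a ?b => change (@eq R a b) end.

Definition ftil (f : R -> R) a b la lb t :=
  if Rle_dec t a then la else if Rle_dec b t then lb else f t.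

Lemma ftil_cont (f : R -> R) a b la lb z : a < b ->
  (forall t, a < t < b -> continuous f t) ->
  filterlim f (at_right a) (locally la) ->
  filterlim f (at_left b) (locally lb) ->
  a <= z <= b -> continuous (ftil f a b la lb) z.
Proof.
  intros Hab Hc Hla Hlb Hz.
  destruct (Req_dec z a) as [->|Hza].
  - apply filterlim_locally. intros eps.
    destruct (proj1 (filterlim_locally _ _) Hla eps) as [del Hdel].
    assert (Hp : 0 < Rmin del (b - a)) by (apply Rmin_pos; [apply cond_pos| lra]).
    exists (mkposreal _ Hp). intros y Hy. pose proof (proj1 (ballR _ _ _) Hy) as Hy2. simpl in Hy2.
    unfold ftil. destruct (Rle_dec a a); [|lra].
    destruct (Rle_dec y a). { apply ball_center. }
    destruct (Rle_dec b y).
    { exfalso. pose proof (Rmin_r del (b-a)). apply Rabs_def2 in Hy2. lra. }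
    apply Hdel. apply ballR. pose proof (Rmin_l del (b-a)). lra. lra.
  - destruct (Req_dec z b) as [->|Hzb].
    + apply filterlim_locally. intros eps.
      destruct (proj1 (filterlim_locally _ _) Hlb eps) as [del Hdel].
      assert (Hp : 0 < Rmin del (b - a)) by (apply Rmin_pos; [apply cond_pos| lra]).
      exists (mkposreal _ Hp). intros y Hy. pose proof (proj1 (ballR _ _ _) Hy) as Hy2. simpl in Hy2.
      unfold ftil. destruct (Rle_dec b a); [lra|]. destruct (Rle_dec b b); [|lra].
      destruct (Rle_dec y a).
      { exfalso. pose proof (Rmin_r del (b-a)). apply Rabs_def2 in Hy2. lra. }
      destruct (Rle_dec b y). { apply ball_center. }
      apply Hdel. apply ballR. pose proof (Rmin_l del (b-a)). lra. lra.
    + assert (Hz' : a < z < b) by lra.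
      apply (continuous_ext_loc _ f).
      * assert (Hp : 0 < Rmin (z - a) (b - z)) by (apply Rmin_pos; lra).
        exists (mkposreal _ Hp). intros y Hy. pose proof (proj1 (ballR _ _ _) Hy) as Hy2. simpl in Hy2.
        pose proof (Rmin_l (z-a) (b-z)). pose proof (Rmin_r (z-a) (b-z)). apply Rabs_def2 in Hy2.
        unfold ftil. destruct (Rle_dec y a); [lra|]. destruct (Rle_dec b y); [lra|]. reflexivity.
      * apply Hc; auto.
Qed.

Lemma piece_int (f phi : R -> R) a b la lb : a < b ->
  (forall t, a < t < b -> continuous f t) ->
  filterlim f (at_right a) (locally la) ->
  filterlim f (at_left b) (locally lb) ->
  (forall t, continuous phi t) -> ex_RInt (fun s => f s * phi s) a b.
Proof.
  intros Hab Hc Hla Hlb Hphi.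
  apply (ex_RInt_ext (fun s => ftil f a b la lb s * phi s)).
  - intros x Hx. rewrite Rmin_left in Hx by lra. rewrite Rmax_right in Hx by lra.
    unfold ftil. destruct (Rle_dec x a); [lra|]. destruct (Rle_dec b x); [lra|]. reflexivity.
  - apply exR_cont. intros z Hz. rewrite Rmin_left in Hz by lra. rewrite Rmax_right in Hz by lra.
    apply cR_mult; [apply ftil_cont; auto | apply Hphi].
Qed.

Definition goodk (k : R -> R) (a b : R) : Prop :=
  (forall s, 0 <= k s) /\
  (forall phi, (forall t, continuous phi t) -> ex_RInt (fun s => k s * phi s) a b).

Lemma pc_int (f phi : R -> R) a b : piecewise_continuous f a b -> (forall t, continuous phi t) ->
  ex_RInt (fun s => f s * phi s) a b.
Proof.
  intros [l [Hlen [H0 [Hlast [Hinc Hpc]]]]] Hphi.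
  assert (Hj : forall j, (1 <= j < length l)%nat -> ex_RInt (fun s => f s * phi s) (nth 0 l 0) (nth j l 0)).
  { induction j as [|j IH]; intros Hj; [lia|].
    destruct (Hpc j ltac:(lia)) as [Hc [[la Hla] [lb Hlb]]].
    assert (Hp : ex_RInt (fun s => f s * phi s) (nth j l 0) (nth (S j) l 0)).
    { apply (piece_int f phi _ _ la lb); auto. apply Hinc; lia. }
    destruct j as [|j]. { exact Hp. }
    apply (ex_RInt_Chasles _ _ (nth (S j) l 0)); auto. apply IH. lia. }
  assert (Hl : forall (l : list R) d, l <> nil -> last l d = nth (pred (length l)) l d).
  { clear. induction l as [|x l IH]; intros d Hn; [congruence|].
    destruct l as [|y l]; [reflexivity|]. change (last (y :: l) d = nth (pred (length (x :: y :: l))) (x :: y :: l) d). rewrite IH by discriminate. simpl. reflexivity. }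
  rewrite <- H0, <- Hlast. rewrite Hl by (intros ->; simpl in Hlen; lia).
  apply Hj. lia.
Qed.

Lemma RIntR_minus (u v : R -> R) a b : ex_RInt u a b -> ex_RInt v a b ->
  RInt (fun s => u s - v s) a b = RInt u a b - RInt v a b.
Proof. intros. exact (@RInt_minus R_CompleteNormedModule u v a b H H0). Qed.
Lemma RIntR_plus (u v : R -> R) a b : ex_RInt u a b -> ex_RInt v a b ->
  RInt (fun s => u s + v s) a b = RInt u a b + RInt v a b.
Proof. intros. exact (@RInt_plus R_CompleteNormedModule u v a b H H0). Qed.
Lemma RIntR_scal (u : R -> R) a b c : ex_RInt u a b ->
  RInt (fun s => c * u s) a b = c * RInt u a b.
Proof. intros. exact (@RInt_scal R_CompleteNormedModule u a b c H). Qed.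
Lemma RIntR_const a b c : RInt (fun _ => c) a b = (b - a) * c.
Proof. exact (@RInt_const R_CompleteNormedModule a b c). Qed.
Lemma RIntR_ext (u v : R -> R) a b : (forall x, Rmin a b < x < Rmax a b -> u x = v x) -> RInt u a b = RInt v a b.
Proof. intros. exact (@RInt_ext R_CompleteNormedModule u v a b H). Qed.
Lemma RIntR_point (u : R -> R) a : RInt u a a = 0.
Proof. exact (@RInt_point R_CompleteNormedModule a u). Qed.
Lemma RIntR_Chasles (u : R -> R) a b c : ex_RInt u a b -> ex_RInt u b c ->
  RInt u a b + RInt u b c = RInt u a c.
Proof. intros. exact (@RInt_Chasles R_CompleteNormedModule u a b c H H0). Qed.

Lemma exR_ext (u v : R -> R) a b : (forall x, Rmin a b < x < Rmax a b -> u x = v x) -> ex_RInt u a b -> ex_RInt v a b.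
Proof. intros. exact (@ex_RInt_ext R_NormedModule u v a b H H0). Qed.

Lemma pc_good f tl tu : pc_density f tl tu -> goodk f tl tu.
Proof.
  intros [Hpc [Hpos _]]. split; auto. intros phi Hphi. apply pc_int; auto.
Qed.

Lemma goodk_mul (w f : R -> R) a b : goodk f a b -> (forall t, continuous w t) -> (forall s, 0 <= w s) ->
  goodk (fun s => w s * f s) a b.
Proof.
  intros [Hp Hi] Hw Hw0. split.
  - intros s. apply Rmult_le_pos; auto.
  - intros phi Hphi. apply (exR_ext (fun s => f s * (w s * phi s))).
    + intros; ring.
    + apply Hi. intros; apply cR_mult; auto.
Qed.

Lemma gk_ex k a b phi : goodk k a b -> (forall t, continuous phi t) -> ex_RInt (fun s => k s * phi s) a b.
Proof. intros [_ H] Hp. apply H; auto. Qed.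

Lemma gk_ex1 k a b : goodk k a b -> ex_RInt k a b.
Proof. intros Hk. apply (exR_ext (fun s => k s * 1)); [intros; ring|]. apply gk_ex; auto. intros; apply cR_const. Qed.

Lemma gk_le k a b phi1 phi2 : goodk k a b -> a <= b -> (forall t, continuous phi1 t) -> (forall t, continuous phi2 t) ->
  (forall s, a <= s <= b -> phi1 s <= phi2 s) ->
  RInt (fun s => k s * phi1 s) a b <= RInt (fun s => k s * phi2 s) a b.
Proof.
  intros Hk Hab H1 H2 Hle. apply RInt_le; auto; try (apply gk_ex; auto).
  intros x Hx. apply Rmult_le_compat_l. apply Hk. apply Hle; lra.
Qed.

Lemma gk_ge0 k a b phi : goodk k a b -> a <= b -> (forall t, continuous phi t) ->
  (forall s, a <= s <= b -> 0 <= phi s) -> 0 <= RInt (fun s => k s * phi s) a b.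
Proof.
  intros Hk Hab H1 Hle. apply RInt_ge_0; auto; try (apply gk_ex; auto).
  intros x Hx. apply Rmult_le_pos. apply Hk. apply Hle; lra.
Qed.

Lemma gk_const k a b c : goodk k a b -> RInt (fun s => k s * c) a b = c * RInt k a b.
Proof.
  intros Hk. rewrite <- RIntR_scal by (apply gk_ex1; auto). apply RIntR_ext. intros; ring.
Qed.

Lemma gk_bound k a b phi eta : goodk k a b -> a <= b -> (forall t, continuous phi t) ->
  (forall s, a <= s <= b -> Rabs (phi s) <= eta) -> Rabs (RInt (fun s => k s * phi s) a b) <= eta * RInt k a b.
Proof.
  intros Hk Hab Hc Hb. rewrite <- gk_const by auto.
  assert (H1 : RInt (fun s => k s * phi s) a b <= RInt (fun s => k s * eta) a b).
  { apply gk_le; auto. intros; apply cR_const. intros s Hs. specialize (Hb s Hs). apply Rabs_le_between in Hb. lra. }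
  assert (H2 : RInt (fun s => k s * - eta) a b <= RInt (fun s => k s * phi s) a b).
  { apply gk_le; auto. intros; apply cR_const. intros s Hs. specialize (Hb s Hs). apply Rabs_le_between in Hb. lra. }
  rewrite gk_const in H2 by auto. rewrite gk_const in H1 by auto. rewrite gk_const by auto.
  apply Rabs_le. lra.
Qed.

Lemma cpt (phi : R -> R) x : continuous phi x -> continuity_pt phi x.
Proof. intros; apply continuity_pt_filterlim; auto. Qed.

Lemma der_cont (J : R -> R) x l : is_derive J x l -> continuous J x.
Proof. intros H. apply (@ex_derive_continuous R_AbsRing R_NormedModule J x). exists l; auto. Qed.

Lemma unifc (phi : R -> R) A B : (forall t, continuous phi t) -> forall eps, 0 < eps ->
  exists del, 0 < del /\ forall p q, A <= p <= B -> A <= q <= B -> Rabs (p - q) < del -> Rabs (phi p - phi q) < eps.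
Proof.
  intros Hc eps He.
  destruct (Heine phi (fun c => A <= c <= B) (compact_P3 A B) (fun x _ => cpt phi x (Hc x)) (mkposreal eps He)) as [del Hd].
  exists del. split; [apply cond_pos|]. intros. apply Hd; auto.
Qed.

Lemma cshift (phi : R -> R) t x : (forall u, continuous phi u) -> continuous (fun s => phi (t - s)) x.
Proof. intros Hc. apply (cR_comp (fun s => t - s) phi). apply cR_minus; [apply cR_const|apply cR_id]. apply Hc. Qed.

Lemma gk_int_ge0 k a b : goodk k a b -> a <= b -> 0 <= RInt k a b.
Proof. intros Hk Hab. apply RInt_ge_0; auto. apply gk_ex1; auto. intros; apply Hk. Qed.

Lemma conv_cont k a b phi : goodk k a b -> a <= b -> (forall t, continuous phi t) ->
  forall t0, continuous (fun t => RInt (fun s => k s * phi (t - s)) a b) t0.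
Proof.
  intros Hk Hab Hc t0. apply filterlim_locally. intros eps.
  pose proof (gk_int_ge0 k a b Hk Hab) as HK.
  set (e' := eps / (RInt k a b + 1)).
  assert (He' : 0 < e') by (unfold e'; apply Rdiv_lt_0_compat; [apply cond_pos|lra]).
  destruct (unifc phi (t0 - b - 1) (t0 - a + 1) Hc e' He') as [del [Hdel Hu]].
  assert (Hp : 0 < Rmin del 1) by (apply Rmin_pos; lra).
  exists (mkposreal _ Hp). intros t Ht. pose proof (proj1 (ballR _ _ _) Ht) as Ht2. simpl in Ht2.
  apply ballR.
  pose proof (Rmin_l del 1). pose proof (Rmin_r del 1).
  rewrite <- RIntR_minus by (apply gk_ex; auto; intros; apply cshift; auto).
  rewrite (RIntR_ext _ (fun s => k s * (phi (t - s) - phi (t0 - s)))) by (intros; ring).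
  apply Rle_lt_trans with (e' * RInt k a b).
  - apply gk_bound; auto.
    + intros; apply cR_minus; apply cshift; auto.
    + intros u Hs. left. apply Rabs_def2 in Ht2. apply Hu; try lra. replace (t - u - (t0 - u)) with (t - t0) by ring. apply Rabs_def1; lra.
  - unfold e'. apply Rlt_le_trans with (eps / (RInt k a b + 1) * (RInt k a b + 1)).
    + apply Rmult_lt_compat_l; [exact He'|lra].
    + right. field. lra.
Qed.

Lemma conv_derive k a b (J J' : R -> R) : goodk k a b -> a <= b ->
  (forall u, is_derive J u (J' u)) -> (forall u, continuous J' u) ->
  forall t0, is_derive (fun t => RInt (fun s => k s * J (t - s)) a b) t0
                       (RInt (fun s => k s * J' (t0 - s)) a b).
Proof.
  intros Hk Hab HJ HJ' t0. apply is_derive_Reals. intros eps Heps.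
  assert (HJc : forall u, continuous J u) by (intros u; apply (der_cont J u (J' u)); auto).
  pose proof (gk_int_ge0 k a b Hk Hab) as HK.
  set (e' := eps / (RInt k a b + 1)).
  assert (He' : 0 < e') by (unfold e'; apply Rdiv_lt_0_compat; lra).
  destruct (unifc J' (t0 - b - 1) (t0 - a + 1) HJ' e' He') as [del [Hdel Hu]].
  assert (Hp : 0 < Rmin del 1) by (apply Rmin_pos; lra).
  exists (mkposreal _ Hp). intros h Hh0 Hh. simpl in Hh.
  pose proof (Rmin_l del 1). pose proof (Rmin_r del 1).
  assert (Heq : (RInt (fun s => k s * J (t0 + h - s)) a b - RInt (fun s => k s * J (t0 - s)) a b) / h
                - RInt (fun s => k s * J' (t0 - s)) a b
              = RInt (fun s => k s * ((J ((t0 + h) - s) - J (t0 - s)) * / h - J' (t0 - s))) a b).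
  { rewrite (RIntR_ext (fun s => k s * ((J ((t0 + h) - s) - J (t0 - s)) * / h - J' (t0 - s)))
               (fun s => / h * (k s * J ((t0 + h) - s) - k s * J (t0 - s)) - k s * J' (t0 - s)))
      by (intros; ring).
    rewrite RIntR_minus.
    2:{ apply (exR_ext (fun s => k s * ((J ((t0 + h) - s) - J (t0 - s)) * / h))); [intros; ring|].
        apply gk_ex; auto. intros u. apply cR_mult; [|apply cR_const]. apply cR_minus; apply cshift; auto. }
    2:{ apply gk_ex; auto. intros; apply cshift; auto. }
    rewrite RIntR_scal.
    2:{ apply (exR_ext (fun s => k s * (J ((t0 + h) - s) - J (t0 - s)))); [intros; ring|].
        apply gk_ex; auto. intros u. apply cR_minus; apply cshift; auto. }
    rewrite RIntR_minus by (apply gk_ex; auto; intros; apply cshift; auto).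
    unfold Rdiv. ring. }
  rewrite Heq.
  apply Rle_lt_trans with (e' * RInt k a b).
  - apply gk_bound; auto.
    + intros u. apply cR_minus; [|apply cshift; auto]. apply cR_mult; [|apply cR_const].
      apply cR_minus; apply cshift; auto.
    + intros s Hs.
      destruct (MVT_gen J (t0 - s) (t0 + h - s) J') as [c [Hc HcE]].
      { intros; auto. }
      { intros; apply cpt; auto. }
      replace ((J (t0 + h - s) - J (t0 - s)) * / h - J' (t0 - s)) with (J' c - J' (t0 - s)).
      2:{ rewrite HcE. field. auto. }
      left. apply Rabs_def2 in Hh.
      assert (Hc2 : Rmin (t0 - s) (t0 + h - s) <= c <= Rmax (t0 - s) (t0 + h - s)) by exact Hc.
      unfold Rmin, Rmax in Hc2. destruct (Rle_dec (t0 - s) (t0 + h - s)).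
      * apply Hu; try lra. apply Rabs_def1; lra.
      * apply Hu; try lra. apply Rabs_def1; lra.
  - unfold e'. apply Rlt_le_trans with (eps / (RInt k a b + 1) * (RInt k a b + 1)).
    + apply Rmult_lt_compat_l; [exact He'|lra].
    + right. field. lra.
Qed.

Lemma mono_dec (F : R -> R) a b : a <= b -> (forall x, a <= x <= b -> continuous F x) ->
  (forall x, a < x < b -> exists l, is_derive F x l /\ l <= 0) -> F b <= F a.
Proof.
  intros Hab Hc Hd.
  destruct (MVT_gen F a b (fun x => Rmin (Derive F x) 0)) as [c [Hc1 Hc2]].
  - intros x Hx. rewrite Rmin_left in Hx by lra. rewrite Rmax_right in Hx by lra.
    destruct (Hd x Hx) as [l [Hl Hl0]]. rewrite (is_derive_unique F x l Hl). rewrite Rmin_left by lra. auto.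
  - intros x Hx. rewrite Rmin_left in Hx by lra. rewrite Rmax_right in Hx by lra. apply cpt. auto.
  - pose proof (Rmin_r (Derive F c) 0). assert (0 <= b - a) by lra.
    assert (Rmin (Derive F c) 0 * (b - a) <= 0).
    { apply Rmult_le_0_r; lra. }
    lra.
Qed.

Lemma barb (x P : R -> R) c M B : 0 < c -> 0 <= B ->
  (forall t, 0 <= t -> 0 <= x t) ->
  (forall t, 0 < t -> continuous x t) ->
  (forall s t, 1 <= s -> 1 <= t -> Rabs (x t - x s) <= B * Rabs (t - s)) ->
  (forall t1 t2, 1 <= t1 <= t2 -> c * RInt x t1 t2 <= P t1 - P t2) ->
  (forall t, 1 <= t -> P 1 - P t <= M) ->
  forall eps, 0 < eps -> exists T, forall t, T <= t -> x t < eps.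
Proof.
  intros Hc HB Hx0 Hxc Hlip HP HM eps Heps.
  apply Classical_Prop.NNPP. intros Hno.
  assert (Hbig : forall T, exists t, T <= t /\ eps <= x t).
  { intros T. apply Classical_Prop.NNPP. intros Hn. apply Hno. exists T. intros t Ht.
    apply Rnot_le_lt. intros Hle. apply Hn. exists t. auto. }
  set (del := eps / (2 * B + 1)).
  assert (Hdel : 0 < del) by (unfold del; apply Rdiv_lt_0_compat; lra).
  assert (HBd : B * del < eps / 2).
  { unfold del. apply Rmult_lt_reg_r with (2 * B + 1); [lra|].
    replace (B * (eps / (2 * B + 1)) * (2 * B + 1)) with (B * eps) by (field; lra). nra. }
  set (a := c * (del * (eps / 2))).
  assert (Ha : 0 < a) by (unfold a; apply Rmult_lt_0_compat; [lra|]; apply Rmult_lt_0_compat; lra).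
  assert (Hint : forall s, 1 <= s -> eps <= x s -> a <= P s - P (s + del)).
  { intros s Hs Hxs. apply Rle_trans with (c * RInt x s (s + del)); [|apply HP; lra].
    unfold a. apply Rmult_le_compat_l; [lra|].
    assert (HR : RInt (fun _ : R => eps / 2) s (s + del) = del * (eps / 2)) by (rewrite RIntR_const; req; ring). rewrite <- HR.
    apply RInt_le; [lra| apply ex_RInt_const |apply exR_cont; intros z Hz; apply Hxc;
       rewrite Rmin_left in Hz by lra; lra|].
    intros u Hu. specialize (Hlip s u Hs ltac:(lra)). apply Rabs_le_between in Hlip.
    rewrite Rabs_right in Hlip by lra.
    assert (B * (u - s) <= B * del) by (apply Rmult_le_compat_l; lra). lra. }
  assert (Hn : forall n : nat, exists t, 1 <= t /\ INR n * a <= P 1 - P t).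
  { induction n as [|n [t [Ht1 Ht2]]].
    - exists 1. split; [lra|]. simpl. lra.
    - destruct (Hbig t) as [s [Hs1 Hs2]].
      exists (s + del). split; [lra|].
      assert (0 <= c * RInt x t s).
      { apply Rmult_le_pos; [lra|]. apply RInt_ge_0; auto.
        apply exR_cont; intros z Hz; apply Hxc; rewrite Rmin_left in Hz by lra; lra.
        intros; apply Hx0; lra. }
      pose proof (HP t s ltac:(lra)). pose proof (Hint s ltac:(lra) Hs2).
      rewrite S_INR. lra. }
  destruct (INR_archimed a M Ha) as [n Hna].
  destruct (Hn n) as [t [Ht1 Ht2]]. specialize (HM t Ht1).
  lra.
Qed.

Lemma dR_plus (f g : R -> R) x df dg : is_derive f x df -> is_derive g x dg -> is_derive (fun y => f y + g y) x (df + dg).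
Proof. intros. apply (is_derive_plus f g); auto. Qed.
Lemma dR_minus (f g : R -> R) x df dg : is_derive f x df -> is_derive g x dg -> is_derive (fun y => f y - g y) x (df - dg).
Proof. intros. apply (is_derive_minus f g); auto. Qed.
Lemma dR_mult (f g : R -> R) x df dg : is_derive f x df -> is_derive g x dg -> is_derive (fun y => f y * g y) x (df * g x + f x * dg).
Proof. intros. apply (is_derive_mult f g); auto. intros; apply Rmult_comm. Qed.
Lemma dR_scal (f : R -> R) x k df : is_derive f x df -> is_derive (fun y => k * f y) x (k * df).
Proof. intros. apply is_derive_scal; auto. Qed.
Lemma dR_eq (f : R -> R) x l l' : is_derive f x l -> l = l' -> is_derive f x l'.
Proof. intros; subst; auto. Qed.
Lemma dR_expl a x : is_derive (fun t => exp (a * t)) x (a * exp (a * x)).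
Proof. auto_derive; auto. ring. Qed.
Lemma dR_const (c x : R) : is_derive (fun _ => c) x 0.
Proof. apply (@is_derive_const R_AbsRing R_NormedModule). Qed.

Lemma cont_within (h : R -> R) D t : continuous h t -> filterlim h (within D (locally t)) (locally (h t)).
Proof. intros H P HP. unfold filtermap, within. apply (filter_imp (fun x => P (h x))). auto. apply H. auto. Qed.

Lemma within_comp (x m : R -> R) (D : R -> Prop) t : (forall u, D (m u)) -> continuous m t ->
  filterlim x (within D (locally (m t))) (locally (x (m t))) -> continuous (fun u => x (m u)) t.
Proof.
  intros HD Hm Hx. unfold continuous. eapply filterlim_comp; [|exact Hx].
  intros P HP. unfold filtermap. unfold within in HP.
  specialize (Hm _ HP). unfold filtermap in Hm. apply (filter_imp _ _ (fun u Hu => Hu (HD u)) Hm).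
Qed.

Definition hh (beta : R -> R) (u : R) := Rmax u 0 * beta (Rmax u 0).
Definition xc (x : R -> R) (tu t : R) := x (Rmax t (- tu)).

Definition MH (tl tu g d : R) (f beta : R -> R) : Prop :=
  0 <= tl /\ tl < tu /\ 0 <= g /\ 0 <= d /\ pc_density f tl tu /\
  (forall u, 0 <= u -> 0 < beta u) /\
  (forall u, 0 <= u -> filterlim beta (within (fun s => 0 <= s) (locally u)) (locally (beta u))) /\
  (forall u v, 0 <= u -> u <= v -> beta v <= beta u).

Definition XS (tl tu g d : R) (f beta x : R -> R) : Prop :=
  (forall t, - tu <= t -> 0 <= x t) /\
  (forall t, - tu <= t -> filterlim x (within (fun s => - tu <= s) (locally t)) (locally (x t))) /\
  (forall t, 0 < t -> is_derive x t (- (d + beta (x t)) * x t + 2 * delayed_term tl tu g f beta x t)).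

Lemma hh_cont beta : (forall u, 0 <= u -> filterlim beta (within (fun s => 0 <= s) (locally u)) (locally (beta u))) ->
  forall u, continuous (hh beta) u.
Proof.
  intros Hb u. unfold hh. apply cR_mult. apply cR_Rmax.
  apply (within_comp beta (fun u => Rmax u 0) (fun s => 0 <= s)). intros; apply Rmax_r. apply cR_Rmax.
  apply Hb. apply Rmax_r.
Qed.

Lemma xc_cont x tu : (forall t, - tu <= t -> filterlim x (within (fun s => - tu <= s) (locally t)) (locally (x t))) ->
  forall t, continuous (xc x tu) t.
Proof.
  intros Hx t. unfold xc. apply (within_comp x (fun u => Rmax u (-tu)) (fun s => - tu <= s)).
  intros; apply Rmax_r. apply cR_Rmax. apply Hx. apply Rmax_r.
Qed.

Lemma hh_ge0 beta u : (forall u, 0 <= u -> 0 < beta u) -> 0 <= hh beta u.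
Proof. intros Hb. unfold hh. apply Rmult_le_pos. apply Rmax_r. left; apply Hb, Rmax_r. Qed.

Lemma hh_le beta u : (forall u, 0 <= u -> 0 < beta u) -> (forall u v, 0 <= u -> u <= v -> beta v <= beta u) ->
  hh beta u <= beta 0 * Rmax u 0.
Proof.
  intros Hb Hd. unfold hh. rewrite Rmult_comm. apply Rmult_le_compat_r. apply Rmax_r.
  apply Hd. lra. apply Rmax_r.
Qed.

Lemma hh_pos beta u : 0 <= u -> hh beta u = u * beta u.
Proof. intros. unfold hh. rewrite Rmax_left by lra. auto. Qed.

Lemma xc_eq x tu t : - tu <= t -> xc x tu t = x t.
Proof. intros. unfold xc. rewrite Rmax_left; auto. Qed.

Definition kk (g : R) (f : R -> R) (s : R) := exp (- g * s) * f s.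
Definition qf beta x tu r := hh beta (xc x tu r).
Definition Jf beta x tu u := RInt (qf beta x tu) 0 u.
Definition Kc tl tu g f := RInt (fun s => exp (- g * s) * f s) tl tu.
Definition Conv tl tu g f beta x u := RInt (fun s => kk g f s * Jf beta x tu (u - s)) tl tu.
Definition W tl tu g f beta x t :=
  xc x tu t + 2 * (Kc tl tu g f * Jf beta x tu t - Conv tl tu g f beta x t).

Lemma goodk_k tl tu g d f beta : MH tl tu g d f beta -> goodk (kk g f) tl tu.
Proof.
  intros (Htl & Htu & Hg & Hd & Hf & _).
  apply (goodk_mul (fun s => exp (- g * s)) f). apply pc_good; auto.
  intros t. apply (cR_comp (fun s => - g * s) exp). apply cR_mult. apply cR_const. apply cR_id. apply cR_exp.
  intros; left; apply exp_pos.
Qed.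

Lemma goodk_f tl tu g d f beta : MH tl tu g d f beta -> goodk f tl tu.
Proof. intros (Htl & Htu & Hg & Hd & Hf & _). apply pc_good; auto. Qed.

Lemma Kc_eq tl tu g f : Kc tl tu g f = RInt (kk g f) tl tu.
Proof. reflexivity. Qed.

Lemma Kc_bounds tl tu g d f beta : MH tl tu g d f beta -> 0 <= Kc tl tu g f <= 1.
Proof.
  intros HM. pose proof (goodk_k _ _ _ _ _ _ HM) as Hk. pose proof (goodk_f _ _ _ _ _ _ HM) as Hf.
  destruct HM as (Htl & Htu & Hg & Hd & (Hpc & Hf0 & Hf1 & Hf2) & _).
  split. rewrite Kc_eq. apply gk_int_ge0; auto; lra.
  rewrite <- Hf2. rewrite Kc_eq. apply RInt_le. lra. apply gk_ex1; auto. apply gk_ex1; auto.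
  intros s Hs. unfold kk. rewrite <- (Rmult_1_l (f s)) at 2. apply Rmult_le_compat_r. apply Hf0.
  rewrite <- exp_0. destruct (Req_dec g 0). subst. right. f_equal. ring.
  left. apply exp_increasing. nra.
Qed.



Lemma qf_cont beta x tu : (forall u, 0 <= u -> filterlim beta (within (fun s => 0 <= s) (locally u)) (locally (beta u))) ->
  (forall t, - tu <= t -> filterlim x (within (fun s => - tu <= s) (locally t)) (locally (x t))) ->
  forall t, continuous (qf beta x tu) t.
Proof.
  intros Hb Hx t. unfold qf. apply (cR_comp (xc x tu) (hh beta)). apply xc_cont; auto. apply hh_cont; auto.
Qed.

Lemma Jf_der beta x tu : (forall t, continuous (qf beta x tu) t) -> forall u, is_derive (Jf beta x tu) u (qf beta x tu u).
Proof.
  intros Hq u. unfold Jf. apply is_derive_RInt with 0.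
  - exists (mkposreal 1 Rlt_0_1). intros y _. apply (@RInt_correct R_CompleteNormedModule).
    apply exR_cont. intros; apply Hq.
  - apply Hq.
Qed.

Lemma Jf_cont beta x tu : (forall t, continuous (qf beta x tu) t) -> forall u, continuous (Jf beta x tu) u.
Proof. intros Hq u. apply (der_cont _ _ _ (Jf_der beta x tu Hq u)). Qed.

Lemma Jdiff beta x tu t s : (forall t, continuous (qf beta x tu) t) ->
  Jf beta x tu t - Jf beta x tu (t - s) = RInt (qf beta x tu) (t - s) t.
Proof.
  intros Hq. unfold Jf. rewrite <- (RIntR_Chasles _ 0 (t - s) t). ring.
  apply exR_cont; intros; apply Hq. apply exR_cont; intros; apply Hq.
Qed.

Lemma Conv_der tl tu g d f beta x : MH tl tu g d f beta -> (forall t, continuous (qf beta x tu) t) ->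
  forall t, is_derive (Conv tl tu g f beta x) t (RInt (fun s => kk g f s * qf beta x tu (t - s)) tl tu).
Proof.
  intros HM Hq t. unfold Conv. apply conv_derive.
  apply (goodk_k _ _ _ d _ beta); auto. destruct HM as (?&?&_); lra.
  apply Jf_der; auto. auto.
Qed.

Lemma delayed_eq tl tu g d f beta x t : MH tl tu g d f beta -> (forall t, - tu <= t -> 0 <= x t) -> 0 <= t ->
  delayed_term tl tu g f beta x t = RInt (fun s => kk g f s * qf beta x tu (t - s)) tl tu.
Proof.
  intros HM Hx Ht. destruct HM as (Htl & Htu & _). unfold delayed_term. apply RIntR_ext.
  intros s Hs. rewrite Rmin_left in Hs by lra. rewrite Rmax_right in Hs by lra.
  unfold kk, qf. rewrite xc_eq by lra. rewrite hh_pos by (apply Hx; lra). ring.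
Qed.

Lemma W_cont tl tu g d f beta x : MH tl tu g d f beta -> (forall t, - tu <= t -> filterlim x (within (fun s => - tu <= s) (locally t)) (locally (x t))) ->
  forall t, continuous (W tl tu g f beta x) t.
Proof.
  intros HM Hx t. pose proof HM as (_&_&_&_&_&_&Hb&_).
  assert (Hq := qf_cont beta x tu Hb Hx).
  unfold W. apply cR_plus. apply xc_cont; auto.
  apply (cR_mult (fun _ => 2)). apply cR_const. apply cR_minus. apply cR_mult. apply cR_const. apply Jf_cont; auto.
  apply (der_cont _ _ _ (Conv_der tl tu g d f beta x HM Hq t)).
Qed.

Lemma W_der tl tu g d f beta x : MH tl tu g d f beta -> XS tl tu g d f beta x ->
  forall t, 0 < t -> is_derive (W tl tu g f beta x) t (x t * ((2 * Kc tl tu g f - 1) * beta (x t) - d)).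
Proof.
  intros HM (Hx0 & Hxc & Hxd) t Ht. pose proof HM as (Htl&Htu&_&_&_&_&Hb&_).
  assert (Hq := qf_cont beta x tu Hb Hxc).
  unfold W.
  eapply dR_eq.
  - apply dR_plus.
    + apply (is_derive_ext_loc x). 2: apply Hxd; auto.
      exists (mkposreal t Ht). intros y Hy. pose proof (proj1 (ballR _ _ _) Hy) as Hy2. simpl in Hy2.
      apply Rabs_def2 in Hy2. rewrite xc_eq; auto. lra.
    + apply dR_scal. apply dR_minus. apply dR_scal. apply Jf_der; auto. apply (Conv_der _ _ _ d _ _ _ HM Hq).
  - rewrite <- (delayed_eq tl tu g d f beta x t) by (auto; lra).
    unfold qf. rewrite xc_eq by lra. rewrite hh_pos by (apply Hx0; lra). req; ring.
Qed.

Lemma xc_ge0 x tu r : (forall t, - tu <= t -> 0 <= x t) -> 0 <= xc x tu r.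
Proof. intros H. unfold xc. apply H. apply Rmax_r. Qed.

Lemma W_split tl tu g d f beta x t : MH tl tu g d f beta -> (forall t, continuous (qf beta x tu) t) ->
  Kc tl tu g f * Jf beta x tu t - Conv tl tu g f beta x t =
  RInt (fun s => kk g f s * (Jf beta x tu t - Jf beta x tu (t - s))) tl tu.
Proof.
  intros HM Hq. pose proof (goodk_k _ _ _ _ _ _ HM) as Hk.
  rewrite Kc_eq. rewrite Rmult_comm. rewrite <- gk_const by auto. unfold Conv.
  rewrite <- RIntR_minus. apply RIntR_ext; intros; ring.
  apply gk_ex; auto; intros; apply cR_const.
  apply gk_ex; auto; intros; apply cshift. apply Jf_cont; auto.
Qed.

Lemma W_bounds tl tu g d f beta x t Q : MH tl tu g d f beta ->
  (forall t, - tu <= t -> filterlim x (within (fun s => - tu <= s) (locally t)) (locally (x t))) ->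
  (forall t, - tu <= t -> 0 <= x t) -> 0 <= Q ->
  (forall r, t - tu <= r <= t -> xc x tu r <= Q) ->
  xc x tu t <= W tl tu g f beta x t <= xc x tu t + 2 * (tu * (beta 0 * Q)).
Proof.
  intros HM Hxc Hx0 HQ HxQ. pose proof (goodk_k _ _ _ _ _ _ HM) as Hk.
  pose proof (Kc_bounds _ _ _ _ _ _ HM) as HK.
  pose proof HM as (Htl&Htu&_&_&_&Hbp&Hb&Hbd).
  assert (Hq := qf_cont beta x tu Hb Hxc).
  assert (Hb0 := Hbp 0 (Rle_refl 0)).
  unfold W. rewrite (W_split _ _ _ d); auto.
  set (phi := fun s => Jf beta x tu t - Jf beta x tu (t - s)).
  assert (Hphic : forall u, continuous phi u).
  { intros u. unfold phi. apply cR_minus. apply cR_const. apply cshift. apply Jf_cont; auto. }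
  assert (Hphi : forall s, tl <= s <= tu -> 0 <= phi s <= tu * (beta 0 * Q)).
  { intros s Hs. unfold phi. rewrite Jdiff by auto. split.
    - apply RInt_ge_0. lra. apply exR_cont; intros; apply Hq. intros r _. apply hh_ge0; auto.
    - apply Rle_trans with (RInt (fun _ => beta 0 * Q) (t - s) t).
      + apply RInt_le. lra. apply exR_cont; intros; apply Hq. apply ex_RInt_const.
        intros r Hr. unfold qf. eapply Rle_trans. apply hh_le; auto.
        rewrite Rmax_left by (apply xc_ge0; auto). apply Rmult_le_compat_l. lra. apply HxQ. lra.
      + rewrite RIntR_const. replace (t - (t - s)) with s by ring.
        apply Rmult_le_compat_r. apply Rmult_le_pos; lra. lra. }
  assert (H1 : 0 <= RInt (fun s => kk g f s * phi s) tl tu).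
  { apply gk_ge0; auto. lra. intros; apply Hphi; auto. }
  assert (H2 : RInt (fun s => kk g f s * phi s) tl tu <= RInt (fun s => kk g f s * (tu * (beta 0 * Q))) tl tu).
  { apply gk_le; auto. lra. intros; apply cR_const. intros; apply Hphi; auto. }
  rewrite gk_const in H2 by auto. rewrite <- Kc_eq in H2.
  assert (tu * (beta 0 * Q) * Kc tl tu g f <= tu * (beta 0 * Q)).
  { rewrite <- (Rmult_1_r (tu * (beta 0 * Q))) at 2. apply Rmult_le_compat_l. apply Rmult_le_pos. lra. apply Rmult_le_pos; lra. lra. }
  change (RInt (fun s => kk g f s * (Jf beta x tu t - Jf beta x tu (t - s))) tl tu) with (RInt (fun s => kk g f s * phi s) tl tu). lra.
Qed.

Definition Ef beta x tu g u := RInt (fun r => exp (g * r) * qf beta x tu r) 0 u.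
Definition Yh tl tu g f beta x t :=
  exp (- g * t) * (Ef beta x tu g t - RInt (fun s => f s * Ef beta x tu g (t - s)) tl tu).

Lemma cexpl a x : continuous (fun t => exp (a * t)) x.
Proof. apply (cR_comp (fun t => a * t) exp). apply cR_mult. apply cR_const. apply cR_id. apply cR_exp. Qed.

Lemma eq_cont beta x tu g : (forall t, continuous (qf beta x tu) t) -> forall r, continuous (fun r => exp (g * r) * qf beta x tu r) r.
Proof. intros Hq r. apply cR_mult. apply cexpl. apply Hq. Qed.

Lemma Ef_der beta x tu g : (forall t, continuous (qf beta x tu) t) -> forall u, is_derive (Ef beta x tu g) u (exp (g * u) * qf beta x tu u).
Proof.
  intros Hq u. unfold Ef. apply (is_derive_RInt (fun r => exp (g * r) * qf beta x tu r)) with 0.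
  - exists (mkposreal 1 Rlt_0_1). intros y _. apply (@RInt_correct R_CompleteNormedModule).
    apply exR_cont. intros; apply eq_cont; auto.
  - apply eq_cont; auto.
Qed.

Lemma Ef_cont beta x tu g : (forall t, continuous (qf beta x tu) t) -> forall u, continuous (Ef beta x tu g) u.
Proof. intros Hq u. apply (der_cont _ _ _ (Ef_der beta x tu g Hq u)). Qed.

Lemma Yh_der tl tu g d f beta x : MH tl tu g d f beta -> (forall t, continuous (qf beta x tu) t) ->
  forall t, is_derive (Yh tl tu g f beta x) t
    (- g * Yh tl tu g f beta x t + qf beta x tu t - RInt (fun s => kk g f s * qf beta x tu (t - s)) tl tu).
Proof.
  intros HM Hq t. pose proof (goodk_f _ _ _ _ _ _ HM) as Hf. pose proof HM as (Htl&Htu&_).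
  unfold Yh. eapply dR_eq.
  - apply dR_mult. apply dR_expl. apply dR_minus. apply Ef_der; auto.
    apply (conv_derive f tl tu (Ef beta x tu g) (fun u => exp (g * u) * qf beta x tu u)); auto. lra.
    apply Ef_der; auto. apply eq_cont; auto.
  - assert (Hs : exp (- g * t) * RInt (fun s => f s * (exp (g * (t - s)) * qf beta x tu (t - s))) tl tu
                = RInt (fun s => kk g f s * qf beta x tu (t - s)) tl tu).
    { rewrite <- RIntR_scal. apply RIntR_ext. intros s _. unfold kk.
      replace (exp (- g * s)) with (exp (- g * t) * exp (g * (t - s))). ring.
      rewrite <- exp_plus. f_equal. ring.
      apply gk_ex; auto. intros u. apply (cshift (fun r => exp (g * r) * qf beta x tu r)). intros; apply eq_cont; auto. }
    rewrite <- Hs. req.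
    assert (HE : exp (- g * t) * exp (g * t) = 1).
    { rewrite <- exp_plus. replace (- g * t + g * t) with 0 by ring. apply exp_0. }
    rewrite (Rmult_minus_distr_l (exp (- g * t))). rewrite <- (Rmult_assoc (exp (- g * t)) (exp (g * t))). rewrite HE. ring.
Qed.

Lemma pm_R (a b : R) : a + b - a = b.
Proof. ring. Qed.

Lemma exp_le_mono a b : a <= b -> exp a <= exp b.
Proof. intros [H|H]. left; apply exp_increasing; auto. subst; lra. Qed.

Lemma f_int1 tl tu g d f beta : MH tl tu g d f beta -> RInt f tl tu = 1.
Proof. intros (_&_&_&_&(_&_&_&H)&_). exact H. Qed.

Definition inner beta x tu g t s := exp (- g * t) * (Ef beta x tu g t - Ef beta x tu g (t - s)).

Lemma inner_cont beta x tu g t : (forall t, continuous (qf beta x tu) t) -> forall u, continuous (inner beta x tu g t) u.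
Proof.
  intros Hq u. unfold inner. apply cR_mult. apply cR_const. apply cR_minus. apply cR_const.
  apply cshift. apply Ef_cont; auto.
Qed.

Lemma Yh_repr tl tu g d f beta x t : MH tl tu g d f beta -> (forall t, continuous (qf beta x tu) t) ->
  Yh tl tu g f beta x t = RInt (fun s => f s * inner beta x tu g t s) tl tu.
Proof.
  intros HM Hq. pose proof (goodk_f _ _ _ _ _ _ HM) as Hf.
  unfold inner, Yh.
  rewrite (RIntR_ext (fun s => f s * (exp (- g * t) * (Ef beta x tu g t - Ef beta x tu g (t - s)))) (fun s => f s * (exp (- g * t) * Ef beta x tu g t) - exp (- g * t) * (f s * Ef beta x tu g (t - s))))
    by (intros; req; ring).
  rewrite RIntR_minus. rewrite gk_const by auto. rewrite (f_int1 tl tu g d f beta HM).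
  rewrite RIntR_scal. req; ring.
  apply gk_ex; auto. intros; apply cshift; apply Ef_cont; auto.
  apply gk_ex; auto. intros; apply cR_const.
  apply (exR_ext (fun s => f s * (exp (- g * t) * Ef beta x tu g (t - s)))). intros; ring.
  apply gk_ex; auto. intros; apply cR_mult. apply cR_const. apply cshift; apply Ef_cont; auto.
Qed.

Lemma inner_bounds tl tu g d f beta x t s Q : MH tl tu g d f beta ->
  (forall t, - tu <= t -> filterlim x (within (fun s => - tu <= s) (locally t)) (locally (x t))) ->
  (forall t, - tu <= t -> 0 <= x t) -> 0 <= Q ->
  (forall r, t - tu <= r <= t -> xc x tu r <= Q) -> tl <= s <= tu ->
  0 <= inner beta x tu g t s <= tu * (beta 0 * Q).
Proof.
  intros HM Hxc Hx0 HQ HxQ Hs. pose proof HM as (Htl&Htu&Hg&_&_&Hbp&Hb&Hbd).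
  assert (Hq := qf_cont beta x tu Hb Hxc). assert (Hb0 := Hbp 0 (Rle_refl 0)).
  unfold inner, Ef. rewrite <- (RIntR_Chasles _ 0 (t - s) t).
  2,3: apply exR_cont; intros; apply eq_cont; auto.
  match goal with |- context [?A + ?B - ?A] => replace (A + B - A) with B by (symmetry; apply pm_R) end.
  split.
  - apply Rmult_le_pos. left; apply exp_pos. apply RInt_ge_0. lra. apply exR_cont; intros; apply eq_cont; auto.
    intros r _. apply Rmult_le_pos. left; apply exp_pos. apply hh_ge0; auto.
  - apply Rle_trans with (exp (- g * t) * RInt (fun _ => exp (g * t) * (beta 0 * Q)) (t - s) t).
    + apply Rmult_le_compat_l. left; apply exp_pos.
      apply RInt_le. lra. apply exR_cont; intros; apply eq_cont; auto. apply ex_RInt_const.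
      intros r Hr. apply Rmult_le_compat. left; apply exp_pos. apply hh_ge0; auto.
      apply exp_le_mono. apply Rmult_le_compat_l; lra.
      unfold qf. eapply Rle_trans. apply hh_le; auto.
      rewrite Rmax_left by (apply xc_ge0; auto). apply Rmult_le_compat_l. lra. apply HxQ. lra.
    + rewrite RIntR_const. replace (t - (t - s)) with s by ring.
      replace (exp (- g * t) * (s * (exp (g * t) * (beta 0 * Q)))) with (exp (- g * t) * exp (g * t) * (s * (beta 0 * Q))) by ring.
      rewrite <- exp_plus. replace (- g * t + g * t) with 0 by ring. rewrite exp_0.
      rewrite Rmult_1_l. apply Rmult_le_compat_r. apply Rmult_le_pos; lra. lra.
Qed.

Lemma Yh_bounds tl tu g d f beta x t Q : MH tl tu g d f beta ->
  (forall t, - tu <= t -> filterlim x (within (fun s => - tu <= s) (locally t)) (locally (x t))) ->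
  (forall t, - tu <= t -> 0 <= x t) -> 0 <= Q ->
  (forall r, t - tu <= r <= t -> xc x tu r <= Q) ->
  0 <= Yh tl tu g f beta x t <= tu * (beta 0 * Q).
Proof.
  intros HM Hxc Hx0 HQ HxQ. pose proof HM as (Htl&Htu&Hg&_&_&Hbp&Hb&Hbd).
  assert (Hq := qf_cont beta x tu Hb Hxc). pose proof (goodk_f _ _ _ _ _ _ HM) as Hf.
  rewrite (Yh_repr _ _ _ d) by auto. split.
  - apply gk_ge0; auto. lra. apply inner_cont; auto. intros s Hs. apply (inner_bounds tl tu g d f beta x t s Q); auto.
  - eapply Rle_trans. apply (gk_le f tl tu _ (fun _ => tu * (beta 0 * Q))); auto. lra.
    apply inner_cont; auto. intros; apply cR_const. intros s Hs. apply (inner_bounds tl tu g d f beta x t s Q); auto.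
    rewrite gk_const by auto. rewrite (f_int1 tl tu g d f beta HM). lra.
Qed.

Lemma y_formula_eq tl tu g d f beta x t : MH tl tu g d f beta ->
  (forall t, - tu <= t -> filterlim x (within (fun s => - tu <= s) (locally t)) (locally (x t))) ->
  (forall t, - tu <= t -> 0 <= x t) -> 0 <= t ->
  y_formula tl tu g f beta x t = Yh tl tu g f beta x t.
Proof.
  intros HM Hxc Hx0 Ht. pose proof HM as (Htl&Htu&Hg&_&_&Hbp&Hb&Hbd).
  assert (Hq := qf_cont beta x tu Hb Hxc).
  rewrite (Yh_repr _ _ _ d) by auto. unfold y_formula. apply RIntR_ext.
  intros s Hs. rewrite Rmin_left in Hs by lra. rewrite Rmax_right in Hs by lra. f_equal.
  unfold inner, Ef. rewrite <- (RIntR_Chasles _ 0 (t - s) t).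
  2,3: apply exR_cont; intros; apply eq_cont; auto.
  match goal with |- context [?A + ?B - ?A] => replace (A + B - A) with B by (symmetry; apply pm_R) end.
  rewrite <- RIntR_scal by (apply exR_cont; intros; apply eq_cont; auto).
  apply RIntR_ext. intros r Hr. rewrite Rmin_left in Hr by lra. rewrite Rmax_right in Hr by lra.
  unfold qf. rewrite xc_eq by lra. rewrite hh_pos by (apply Hx0; lra).
  replace (exp (- g * (t - r))) with (exp (- g * t) * exp (g * r)). ring.
  rewrite <- exp_plus. f_equal. ring.
Qed.

Lemma sol_XS tl tu g d f beta x y : is_solution tl tu g d f beta x y -> XS tl tu g d f beta x.
Proof. intros (H1&H2&H3&H4&H5&H6&H7). split; auto. Qed.

Lemma y_eq_Yh tl tu g d f beta x y : MH tl tu g d f beta -> is_solution tl tu g d f beta x y ->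
  forall t, 0 < t -> y t = Yh tl tu g f beta x t.
Proof.
  intros HM Hs. pose proof (sol_XS _ _ _ _ _ _ _ _ Hs) as HX.
  destruct Hs as (Hx0&Hy0&Hxc&Hyc&Hxd&Hyd&Hyf).
  pose proof HM as (Htl&Htu&Hg&_&_&Hbp&Hb&Hbd).
  assert (Hq := qf_cont beta x tu Hb Hxc).
  assert (Hge : forall t, tu <= t -> y t = Yh tl tu g f beta x t).
  { intros t Ht. rewrite Hyf by auto. apply (y_formula_eq _ _ _ d); auto. lra. }
  intros t Ht. destruct (Rle_lt_dec tu t) as [Htu'|Htu']. apply Hge; auto.
  set (z := fun u => (y u - Yh tl tu g f beta x u) * exp (g * u)).
  assert (Hzd : forall u, 0 < u -> is_derive z u 0).
  { intros u Hu. unfold z. eapply dR_eq.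
    apply dR_mult. apply dR_minus. apply Hyd; auto. apply (Yh_der _ _ _ d); auto. apply dR_expl.
    rewrite <- (delayed_eq tl tu g d f beta x u) by (auto; lra).
    unfold qf. rewrite xc_eq by lra. rewrite hh_pos by (apply Hx0; lra). req; ring. }
  assert (Hzc : forall u, 0 < u -> continuous z u).
  { intros u Hu. apply (der_cont z u 0). auto. }
  assert (H1 : z tu <= z t).
  { apply mono_dec. lra. intros; apply Hzc; lra. intros u Hu. exists 0. split; [apply Hzd; lra|lra]. }
  assert (H2 : - z tu <= - z t).
  { apply (mono_dec (fun u => - z u)). lra.
    intros; apply cR_opp; apply Hzc; lra.
    intros u Hu. exists (- 0). split; [|lra].
    apply (is_derive_opp z u 0). apply Hzd; lra. }
  assert (Hz0 : z tu = 0).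
  { unfold z. rewrite Hge by lra. ring. }
  assert (Hzt : z t = 0) by lra.
  unfold z in Hzt. apply Rmult_integral in Hzt. destruct Hzt as [Hzt|Hzt]. lra.
  pose proof (exp_pos (g * t)). lra.
Qed.

Lemma xc_bound x tu a b : (forall t, - tu <= t -> filterlim x (within (fun s => - tu <= s) (locally t)) (locally (x t))) ->
  a <= b -> exists Q, 0 <= Q /\ forall r, a <= r <= b -> xc x tu r <= Q.
Proof.
  intros Hxc Hab. destruct (continuity_ab_maj (xc x tu) a b Hab) as [m [Hm _]].
  intros; apply cpt; apply xc_cont; auto.
  exists (Rmax (xc x tu m) 0). split. apply Rmax_r. intros r Hr. eapply Rle_trans. apply Hm; auto. apply Rmax_l.
Qed.

Lemma W_lower tl tu g d f beta x t : MH tl tu g d f beta ->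
  (forall t, - tu <= t -> filterlim x (within (fun s => - tu <= s) (locally t)) (locally (x t))) ->
  (forall t, - tu <= t -> 0 <= x t) -> xc x tu t <= W tl tu g f beta x t.
Proof.
  intros HM Hxc Hx0. pose proof HM as (Htl&Htu&_).
  destruct (xc_bound x tu (t - tu) t Hxc) as [Q [HQ HQ2]]. lra.
  apply (W_bounds tl tu g d f beta x t Q); auto.
Qed.

Lemma W_mono tl tu g d f beta x t1 t2 : MH tl tu g d f beta -> XS tl tu g d f beta x ->
  (forall v, 0 <= v -> (2 * Kc tl tu g f - 1) * beta v - d <= 0) ->
  0 <= t1 <= t2 -> W tl tu g f beta x t2 <= W tl tu g f beta x t1.
Proof.
  intros HM HX Hsg Ht. pose proof HX as (Hx0&Hxc&Hxd).
  apply mono_dec. lra. intros; apply (W_cont _ _ _ d); auto.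
  intros u Hu. exists (x u * ((2 * Kc tl tu g f - 1) * beta (x u) - d)). split.
  apply W_der; auto. lra.
  apply Rmult_le_0_l. apply Hx0. pose proof HM as (Htl&Htu&_). lra. apply Hsg. apply Hx0. pose proof HM as (Htl&Htu&_). lra.
Qed.

Lemma gas_stable tl tu g d f beta : MH tl tu g d f beta ->
  (forall v, 0 <= v -> (2 * Kc tl tu g f - 1) * beta v - d <= 0) ->
  E0_stable tl tu g d f beta.
Proof.
  intros HM Hsg eps Heps. pose proof HM as (Htl&Htu&Hg&Hd&_&Hbp&Hb&Hbd).
  assert (Hb0 := Hbp 0 (Rle_refl 0)).
  set (C1 := 1 + 2 * (tu * beta 0)).
  assert (HC1 : 1 <= C1) by (unfold C1; assert (0 <= tu * beta 0) by (apply Rmult_le_pos; lra); lra).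
  assert (Htb : 0 <= tu * beta 0) by (apply Rmult_le_pos; lra).
  set (eta := eps / (2 + C1 + tu * beta 0 * C1)).
  assert (Hden : 0 < 2 + C1 + tu * beta 0 * C1) by (assert (0 <= tu * beta 0 * C1) by (apply Rmult_le_pos; lra); lra).
  assert (Heta : 0 < eta) by (unfold eta; apply Rdiv_lt_0_compat; lra).
  assert (HetaC : eta * (2 + C1 + tu * beta 0 * C1) = eps) by (unfold eta; field; lra).
  assert (HC1e : C1 * eta < eps).
  { assert (0 <= tu * beta 0 * C1 * eta) by (apply Rmult_le_pos; [apply Rmult_le_pos|]; lra). rewrite <- HetaC.
    replace (eta * (2 + C1 + tu * beta 0 * C1)) with (C1 * eta + (2 * eta + tu * beta 0 * C1 * eta)) by ring. lra. }
  assert (HC2e : tu * (beta 0 * (C1 * eta)) < eps).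
  { assert (0 <= C1 * eta) by (apply Rmult_le_pos; lra). rewrite <- HetaC.
    replace (eta * (2 + C1 + tu * beta 0 * C1)) with (tu * (beta 0 * (C1 * eta)) + (2 * eta + C1 * eta)) by ring. lra. }
  exists eta. split; auto.
  intros x y Hs Hinit t Ht.
  pose proof (sol_XS _ _ _ _ _ _ _ _ Hs) as HX. pose proof HX as (Hx0&Hxc&Hxd).
  assert (Hhist : forall r, r <= 0 -> xc x tu r <= eta).
  { intros r Hr. unfold xc. assert (Hm : - tu <= Rmax r (- tu) <= 0).
    { split. apply Rmax_r. unfold Rmax. destruct (Rle_dec r (-tu)); lra. }
    destruct (Hinit _ Hm) as [H1 _]. apply Rabs_def2 in H1. lra. }
  assert (HW0 : W tl tu g f beta x 0 <= C1 * eta).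
  { destruct (W_bounds tl tu g d f beta x 0 eta) as [_ H2]; auto. lra.
    intros r Hr. apply Hhist. lra.
    assert (xc x tu 0 <= eta) by (apply Hhist; lra). unfold C1. lra. }
  assert (Hxall : forall r, xc x tu r <= C1 * eta).
  { intros r. destruct (Rle_lt_dec r 0).
    - eapply Rle_trans. apply Hhist; auto. rewrite <- (Rmult_1_l eta) at 1. apply Rmult_le_compat_r; lra.
    - eapply Rle_trans. apply (W_lower tl tu g d f beta); auto.
      eapply Rle_trans. apply (W_mono tl tu g d f beta x 0 r); auto. lra. auto. }
  split.
  - rewrite Rabs_right by (apply Rle_ge, Hx0; lra). rewrite <- (xc_eq x tu t) by lra.
    eapply Rle_lt_trans. apply Hxall. auto.
  - destruct (Req_dec t 0) as [->|Ht0].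
    + destruct (Hinit 0 ltac:(lra)) as [_ H]. assert (eta <= C1 * eta) by (rewrite <- (Rmult_1_l eta) at 1; apply Rmult_le_compat_r; lra). lra.
    + rewrite (y_eq_Yh tl tu g d f beta x y) by (auto; lra).
      assert (HB : 0 <= Yh tl tu g f beta x t <= tu * (beta 0 * (C1 * eta))).
      { apply (Yh_bounds tl tu g d f beta x t (C1 * eta)); auto.
        all: try (apply Rmult_le_pos; lra). all: intros; apply Hxall. }
      rewrite Rabs_right by lra. lra.
Qed.

Lemma sign_from tl tu g f beta d : (forall u, 0 <= u -> 0 < beta u) -> 0 <= d ->
  (forall u v, 0 <= u -> u <= v -> beta v <= beta u) ->
  (2 * Kc tl tu g f - 1) * beta 0 < d -> forall v, 0 <= v -> (2 * Kc tl tu g f - 1) * beta v - d <= 0.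
Proof.
  intros Hbp Hd Hbd Hc v Hv. pose proof (Hbd 0 v (Rle_refl 0) Hv). pose proof (Hbp v Hv).
  destruct (Rle_dec 0 (2 * Kc tl tu g f - 1)).
  - assert ((2 * Kc tl tu g f - 1) * beta v <= (2 * Kc tl tu g f - 1) * beta 0) by (apply Rmult_le_compat_l; auto). lra.
  - assert ((2 * Kc tl tu g f - 1) * beta v <= 0) by (apply Rmult_le_0_r; lra). lra.
Qed.

Lemma x_lip tl tu g d f beta x M : MH tl tu g d f beta -> XS tl tu g d f beta x ->
  (forall r, xc x tu r <= M) ->
  forall s t, 1 <= s -> 1 <= t -> Rabs (x t - x s) <= ((d + beta 0) * M + 2 * (beta 0 * M)) * Rabs (t - s).
Proof.
  intros HM HX HMb s t Hs Ht. pose proof HX as (Hx0&Hxc&Hxd).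
  pose proof HM as (Htl&Htu&Hg&Hd&_&Hbp&Hb&Hbd). assert (Hb0 := Hbp 0 (Rle_refl 0)).
  assert (Hq := qf_cont beta x tu Hb Hxc). pose proof (goodk_k _ _ _ _ _ _ HM) as Hk.
  pose proof (Kc_bounds _ _ _ _ _ _ HM) as HK.
  assert (HM0 : 0 <= M) by (eapply Rle_trans; [apply (xc_ge0 x tu 0); auto | apply HMb]).
  set (df := fun u => - (d + beta (x u)) * x u + 2 * delayed_term tl tu g f beta x u).
  assert (Hdf : forall u, 0 < u -> Rabs (df u) <= (d + beta 0) * M + 2 * (beta 0 * M)).
  { intros u Hu. unfold df. rewrite (delayed_eq tl tu g d f beta x u) by (auto; lra).
    assert (Hxu : 0 <= x u <= M) by (split; [apply Hx0; lra| rewrite <- (xc_eq x tu u) by lra; apply HMb]).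
    assert (Hbu : 0 < beta (x u) <= beta 0) by (split; [apply Hbp; lra| apply Hbd; lra]).
    assert (H1 : Rabs (- (d + beta (x u)) * x u) <= (d + beta 0) * M).
    { rewrite Rabs_left1. 2:{ assert (0 <= (d + beta (x u)) * x u) by (apply Rmult_le_pos; lra). lra. }
      replace (- (- (d + beta (x u)) * x u)) with ((d + beta (x u)) * x u) by ring.
      apply Rmult_le_compat; lra. }
    assert (H2 : Rabs (RInt (fun s0 => kk g f s0 * qf beta x tu (u - s0)) tl tu) <= beta 0 * M).
    { eapply Rle_trans. apply (gk_bound _ _ _ _ (beta 0 * M)); auto. lra.
      intros; apply cshift; auto.
      intros r _. rewrite Rabs_right by (apply Rle_ge, hh_ge0; auto). unfold qf.
      eapply Rle_trans. apply hh_le; auto. rewrite Rmax_left by (apply xc_ge0; auto).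
      apply Rmult_le_compat_l; [lra|apply HMb].
      rewrite Kc_eq in HK. rewrite <- (Rmult_1_r (beta 0 * M)) at 2. apply Rmult_le_compat_l.
      apply Rmult_le_pos; lra. lra. }
    eapply Rle_trans. apply Rabs_triang. rewrite (Rabs_mult 2). rewrite (Rabs_right 2) by lra. lra. }
  destruct (MVT_gen x s t df) as [c [Hc HcE]].
  - intros u Hu. apply Hxd. unfold Rmin in Hu; destruct (Rle_dec s t); lra.
  - intros u Hu. apply cpt. apply (der_cont x u (df u)). apply Hxd. unfold Rmin in Hu; destruct (Rle_dec s t); lra.
  - rewrite HcE. rewrite Rabs_mult. apply Rmult_le_compat_r. apply Rabs_pos. apply Hdf.
    unfold Rmin in Hc; destruct (Rle_dec s t); lra.
Qed.

Lemma int_decay tl tu g d f beta x (P : R -> R) c : MH tl tu g d f beta -> XS tl tu g d f beta x ->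
  (forall t, continuous P t) ->
  (forall u, 0 < u -> exists l, is_derive P u l /\ l <= - c * x u) ->
  forall t1 t2, 1 <= t1 <= t2 -> c * RInt x t1 t2 <= P t1 - P t2.
Proof.
  intros HM HX HP HPd t1 t2 Ht. pose proof HX as (Hx0&Hxc&Hxd). pose proof HM as (Htl&Htu&_).
  assert (HXc := xc_cont x tu Hxc).
  set (G := fun u => P u + c * RInt (xc x tu) t1 u).
  assert (HGd : forall u, is_derive (fun u => RInt (xc x tu) t1 u) u (xc x tu u)).
  { intros u. apply is_derive_RInt with t1.
    exists (mkposreal 1 Rlt_0_1). intros y _. apply (@RInt_correct R_CompleteNormedModule).
    apply exR_cont. intros; apply HXc. apply HXc. }
  assert (H : G t2 <= G t1).
  { apply mono_dec. lra.
    - intros u Hu. unfold G. apply cR_plus. apply HP. apply (cR_mult (fun _ => c)). apply cR_const.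
      apply (der_cont _ _ _ (HGd u)).
    - intros u Hu. destruct (HPd u ltac:(lra)) as [l [Hl1 Hl2]]. exists (l + c * xc x tu u). split.
      unfold G. apply dR_plus; auto. apply dR_scal. apply HGd.
      rewrite xc_eq by lra. lra. }
  unfold G in H. rewrite RIntR_point in H.
  rewrite (RIntR_ext x (xc x tu)). lra.
  intros u Hu. rewrite Rmin_left in Hu by lra. rewrite xc_eq; auto. lra.
Qed.



Lemma gas_attr tl tu g d f beta : MH tl tu g d f beta ->
  (2 * Kc tl tu g f - 1) * beta 0 < d -> E0_attractive tl tu g d f beta.
Proof.
  intros HM Hcond x y Hs. pose proof HM as (Htl&Htu&Hg&Hd&_&Hbp&Hb&Hbd). assert (Hb0 := Hbp 0 (Rle_refl 0)).
  pose proof (sol_XS _ _ _ _ _ _ _ _ Hs) as HX. pose proof HX as (Hx0&Hxc&Hxd).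
  assert (Hsg := sign_from tl tu g f beta d Hbp Hd Hbd Hcond).
  destruct (xc_bound x tu (- tu) 0 Hxc) as [Q0 [HQ0 HQ0b]]. lra.
  set (M := Rmax (W tl tu g f beta x 0) Q0).
  assert (HMb : forall r, xc x tu r <= M).
  { intros r. destruct (Rle_lt_dec r 0).
    - eapply Rle_trans; [|apply Rmax_r]. unfold xc.
      assert (Hm : - tu <= Rmax r (- tu) <= 0).
      { split. apply Rmax_r. unfold Rmax. destruct (Rle_dec r (-tu)); lra. }
      rewrite <- (xc_eq x tu (Rmax r (-tu))) by lra. apply HQ0b. auto.
    - eapply Rle_trans; [|apply Rmax_l]. eapply Rle_trans. apply (W_lower tl tu g d f beta); auto.
      apply (W_mono tl tu g d f beta); auto. lra. }
  assert (HM0 : 0 <= M) by (eapply Rle_trans; [apply (xc_ge0 x tu 0); auto | apply HMb]).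
  set (c := if Rle_dec 0 (2 * Kc tl tu g f - 1) then d - (2 * Kc tl tu g f - 1) * beta 0
            else d + (1 - 2 * Kc tl tu g f) * beta M).
  assert (Hc : 0 < c).
  { unfold c. destruct (Rle_dec 0 (2 * Kc tl tu g f - 1)). lra.
    assert (0 < (1 - 2 * Kc tl tu g f) * beta M) by (apply Rmult_lt_0_compat; [lra|apply Hbp; auto]). lra. }
  assert (Hcv : forall v, 0 <= v <= M -> (2 * Kc tl tu g f - 1) * beta v - d <= - c).
  { intros v Hv. unfold c. pose proof (Hbd 0 v ltac:(lra) ltac:(lra)). pose proof (Hbd v M ltac:(lra) ltac:(lra)).
    destruct (Rle_dec 0 (2 * Kc tl tu g f - 1)).
    - assert ((2 * Kc tl tu g f - 1) * beta v <= (2 * Kc tl tu g f - 1) * beta 0) by (apply Rmult_le_compat_l; auto). lra.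
    - assert ((1 - 2 * Kc tl tu g f) * beta M <= (1 - 2 * Kc tl tu g f) * beta v) by (apply Rmult_le_compat_l; lra). lra. }
  assert (Hlim : forall eps, 0 < eps -> exists T, forall t, T <= t -> x t < eps).
  { apply (barb x (W tl tu g f beta x) c (W tl tu g f beta x 0) ((d + beta 0) * M + 2 * (beta 0 * M))); auto.
    - assert (0 <= (d + beta 0) * M) by (apply Rmult_le_pos; lra).
      assert (0 <= beta 0 * M) by (apply Rmult_le_pos; lra). lra.
    - intros t Ht. apply Hx0. lra.
    - intros t Ht. apply (der_cont x t _ (Hxd t Ht)).
    - intros s t Hs' Ht. apply (x_lip tl tu g d f beta x M); auto.
    - intros t1 t2 Ht. apply (int_decay tl tu g d f beta x (W tl tu g f beta x) c); auto.
      intros t; apply (W_cont _ _ _ d); auto.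
      intros u Hu. exists (x u * ((2 * Kc tl tu g f - 1) * beta (x u) - d)). split. apply W_der; auto.
      assert (Hxu : 0 <= x u <= M) by (split; [apply Hx0; lra| rewrite <- (xc_eq x tu u) by lra; apply HMb]).
      specialize (Hcv (x u) Hxu).
      replace (- c * x u) with (x u * - c) by ring. apply Rmult_le_compat_l; lra.
    - intros t Ht. pose proof (W_mono tl tu g d f beta x 0 1 HM HX Hsg ltac:(lra)).
      pose proof (W_lower tl tu g d f beta x t HM Hxc Hx0). pose proof (xc_ge0 x tu t Hx0). lra. }
  split.
  - apply is_lim_spec. intros eps. destruct (Hlim eps (cond_pos eps)) as [T HT].
    exists (Rmax T 0). intros t Ht. pose proof (Rmax_l T 0). pose proof (Rmax_r T 0).
    rewrite Rminus_0_r. rewrite Rabs_right by (apply Rle_ge, Hx0; lra). apply HT; lra.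
  - apply is_lim_spec. intros eps.
    assert (Htb : 0 <= tu * beta 0) by (apply Rmult_le_pos; lra).
    set (e' := eps / (tu * beta 0 + 1)).
    assert (He' : 0 < e') by (unfold e'; apply Rdiv_lt_0_compat; [apply cond_pos|lra]).
    destruct (Hlim e' He') as [T HT].
    exists (Rmax T 0 + tu). intros t Ht. pose proof (Rmax_l T 0). pose proof (Rmax_r T 0).
    rewrite Rminus_0_r. rewrite (y_eq_Yh tl tu g d f beta x y) by (auto; lra).
    assert (HB : 0 <= Yh tl tu g f beta x t <= tu * (beta 0 * e')).
    { apply (Yh_bounds tl tu g d f beta x t e'); auto. lra.
      intros r Hr. rewrite xc_eq by lra. left. apply HT. lra. }
    rewrite Rabs_right by lra.
    assert (tu * (beta 0 * e') < eps).
    { assert (Hee : e' * (tu * beta 0 + 1) = eps) by (unfold e'; field; lra).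
      rewrite <- Rmult_assoc. rewrite <- Hee. lra. }
    lra.
Qed.

Lemma gas_thm tl tu g d f beta : MH tl tu g d f beta ->
  (2 * Kc tl tu g f - 1) * beta 0 < d -> E0_GAS tl tu g d f beta.
Proof.
  intros HM Hc. pose proof HM as (Htl&Htu&Hg&Hd&_&Hbp&Hb&Hbd). split.
  apply gas_stable; auto. apply (sign_from tl tu g f beta d); auto.
  apply gas_attr; auto.
Qed.

Definition FF tl tu g d f beta (u : R -> R) (r : R) :=
  - d * u r - hh beta (u r) + 2 * RInt (fun s => kk g f s * hh beta (u (r - s))) tl tu.

Definition Phi tl tu g d f beta (c : R) (u : R -> R) (t : R) :=
  c + RInt (FF tl tu g d f beta u) 0 (Rmax t 0).

Fixpoint pic tl tu g d f beta c (n : nat) : R -> R :=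
  match n with
  | O => fun _ => c
  | S n => Phi tl tu g d f beta c (pic tl tu g d f beta c n)
  end.

Lemma FF_cont tl tu g d f beta u : MH tl tu g d f beta -> (forall t, continuous u t) ->
  forall t, continuous (FF tl tu g d f beta u) t.
Proof.
  intros HM Hu t. pose proof HM as (Htl&Htu&Hg&Hd&_&Hbp&Hb&Hbd).
  assert (Hhu : forall t, continuous (fun r => hh beta (u r)) t).
  { intros r. apply (cR_comp u (hh beta)). auto. apply hh_cont; auto. }
  unfold FF. apply cR_plus. apply cR_minus. apply (cR_mult (fun _ => - d)). apply cR_const. auto. auto.
  apply (cR_mult (fun _ => 2)). apply cR_const.
  apply (conv_cont (kk g f) tl tu (fun r => hh beta (u r))). apply (goodk_k _ _ _ d _ beta); auto. lra. auto.
Qed.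

Lemma RInt_up_der (G : R -> R) : (forall t, continuous G t) -> forall t, is_derive (fun b => RInt G 0 b) t (G t).
Proof.
  intros HG t. apply is_derive_RInt with 0.
  exists (mkposreal 1 Rlt_0_1). intros y _. apply (@RInt_correct R_CompleteNormedModule).
  apply exR_cont. intros; apply HG. apply HG.
Qed.

Lemma Phi_cont tl tu g d f beta c u : MH tl tu g d f beta -> (forall t, continuous u t) ->
  forall t, continuous (Phi tl tu g d f beta c u) t.
Proof.
  intros HM Hu t. unfold Phi. apply cR_plus. apply cR_const.
  apply (cR_comp (fun t => Rmax t 0) (fun b => RInt (FF tl tu g d f beta u) 0 b)). apply cR_Rmax.
  apply (der_cont _ _ _ (RInt_up_der _ (FF_cont tl tu g d f beta u HM Hu) _)).
Qed.

Lemma pic_cont tl tu g d f beta c n : MH tl tu g d f beta -> forall t, continuous (pic tl tu g d f beta c n) t.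
Proof.
  intros HM. induction n as [|n IH]; intros t; simpl. apply cR_const. apply Phi_cont; auto.
Qed.

Lemma hh_lip beta L : (forall u v, 0 <= u -> 0 <= v -> Rabs (u * beta u - v * beta v) <= L * Rabs (u - v)) ->
  forall u v, Rabs (hh beta u - hh beta v) <= (Rmax L 0 + 1) * Rabs (u - v).
Proof.
  intros HL u v. unfold hh. eapply Rle_trans. apply HL; apply Rmax_r.
  pose proof (Rmax_lip 0 u v). pose proof (Rabs_pos (Rmax u 0 - Rmax v 0)). pose proof (Rabs_pos (u - v)).
  apply Rle_trans with (Rmax L 0 * Rabs (Rmax u 0 - Rmax v 0)).
  apply Rmult_le_compat_r. auto. apply Rmax_l.
  apply Rle_trans with (Rmax L 0 * Rabs (u - v)). apply Rmult_le_compat_l. apply Rmax_r. auto.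
  pose proof (Rmax_r L 0). nra.
Qed.

Lemma FF_lip tl tu g d f beta Lh u v r eps : MH tl tu g d f beta -> 0 <= Lh ->
  (forall a b, Rabs (hh beta a - hh beta b) <= Lh * Rabs (a - b)) ->
  (forall t, continuous u t) -> (forall t, continuous v t) -> 0 <= eps ->
  (forall w, w <= r -> Rabs (u w - v w) <= eps) ->
  Rabs (FF tl tu g d f beta u r - FF tl tu g d f beta v r) <= (d + 3 * Lh) * eps.
Proof.
  intros HM HLh Hl Hu Hv He Hw. pose proof HM as (Htl&Htu&Hg&Hd&_&Hbp&Hb&Hbd).
  pose proof (goodk_k _ _ _ _ _ _ HM) as Hk. pose proof (Kc_bounds _ _ _ _ _ _ HM) as HK. rewrite Kc_eq in HK.
  assert (Hhu : forall u, (forall t, continuous u t) -> forall t, continuous (fun s => hh beta (u (r - s))) t).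
  { intros w Hw' t. apply (cR_comp (fun s => w (r - s)) (hh beta)). apply cshift; auto. apply hh_cont; auto. }
  unfold FF.
  replace (- d * u r - hh beta (u r) + 2 * RInt (fun s => kk g f s * hh beta (u (r - s))) tl tu -
    (- d * v r - hh beta (v r) + 2 * RInt (fun s => kk g f s * hh beta (v (r - s))) tl tu))
    with (- d * (u r - v r) - (hh beta (u r) - hh beta (v r)) +
          2 * (RInt (fun s => kk g f s * hh beta (u (r - s))) tl tu - RInt (fun s => kk g f s * hh beta (v (r - s))) tl tu))
    by ring.
  rewrite <- RIntR_minus by (apply gk_ex; auto).
  rewrite (RIntR_ext _ (fun s => kk g f s * (hh beta (u (r - s)) - hh beta (v (r - s))))) by (intros; req; ring).
  assert (H1 : Rabs (RInt (fun s => kk g f s * (hh beta (u (r - s)) - hh beta (v (r - s)))) tl tu) <= Lh * eps).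
  { eapply Rle_trans. apply (gk_bound _ _ _ _ (Lh * eps)); auto. lra.
    intros t; apply cR_minus; apply Hhu; auto.
    intros s Hs. eapply Rle_trans. apply Hl. apply Rmult_le_compat_l; auto. apply Hw. lra.
    rewrite <- (Rmult_1_r (Lh * eps)) at 2. apply Rmult_le_compat_l. apply Rmult_le_pos; lra. lra. }
  assert (H2 : Rabs (hh beta (u r) - hh beta (v r)) <= Lh * eps).
  { eapply Rle_trans. apply Hl. apply Rmult_le_compat_l; auto. apply Hw. lra. }
  assert (H3 : Rabs (- d * (u r - v r)) <= d * eps).
  { rewrite Rabs_mult. rewrite Rabs_Ropp. rewrite Rabs_right by lra. apply Rmult_le_compat_l; auto. apply Hw; lra. }
  eapply Rle_trans. apply Rabs_triang. eapply Rle_trans. apply Rplus_le_compat_r. apply Rabs_triang.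
  rewrite Rabs_Ropp. rewrite (Rabs_mult 2). rewrite (Rabs_right 2) by lra. lra.
Qed.

Lemma dpoly (c L : R) n x : is_derive (fun r => c * (L * r) ^ (S (S n)) / INR (fact (S (S n)))) x (L * (c * (L * x) ^ (S n) / INR (fact (S n)))).
Proof.
  assert (Hf : INR (fact (S (S n))) = INR (S (S n)) * INR (fact (S n))).
  { rewrite <- mult_INR. reflexivity. }
  assert (H0 : INR (fact (S n)) <> 0) by apply INR_fact_neq_0.
  assert (H1 : INR (S (S n)) <> 0) by (apply not_0_INR; lia).
  assert (HD : is_derive (fun r => (L * r) ^ (S (S n))) x (INR (S (S n)) * L * (L * x) ^ (S n))).
  { assert (HL : is_derive (fun r => L * r) x L) by (auto_derive; auto; ring).
    pose proof (is_derive_pow (fun r => L * r) (S (S n)) x L HL) as H. simpl pred in H. exact H. }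
  apply (is_derive_ext (fun r => (c / INR (fact (S (S n)))) * (L * r) ^ (S (S n)))).
  intros; unfold Rdiv; req; ring.
  eapply dR_eq. apply dR_scal. exact HD. rewrite Hf. req. field. auto.
Qed.

Lemma poly_int (c L : R) n T : 0 <= T ->
  RInt (fun r => L * (c * (L * Rmax r 0) ^ (S n) / INR (fact (S n)))) 0 T =
  c * (L * T) ^ (S (S n)) / INR (fact (S (S n))).
Proof.
  intros HT. rewrite (RIntR_ext _ (fun r => L * (c * (L * r) ^ (S n) / INR (fact (S n))))).
  2:{ intros r Hr. rewrite Rmin_left in Hr by lra. rewrite Rmax_left by lra. reflexivity. }
  apply is_RInt_unique.
  replace (c * (L * T) ^ (S (S n)) / INR (fact (S (S n)))) with
    (minus (c * (L * T) ^ (S (S n)) / INR (fact (S (S n)))) (c * (L * 0) ^ (S (S n)) / INR (fact (S (S n))))).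
  2:{ replace (L * 0) with 0 by ring. rewrite (pow_i (S (S n))) by lia. unfold Rdiv. rewrite Rmult_0_r, Rmult_0_l. unfold minus, plus, opp; simpl. rewrite Ropp_0, Rplus_0_r. reflexivity. }
  apply (@is_RInt_derive R_CompleteNormedModule (fun r => c * (L * r) ^ (S (S n)) / INR (fact (S (S n))))).
  intros; apply dpoly.
  intros x _. apply cR_mult. apply cR_const. apply cR_mult. apply cR_mult. apply cR_const.
  apply (cR_comp (fun r => L * r) (fun y => y ^ (S n))). apply cR_mult. apply cR_const. apply cR_id.
  apply continuity_pt_filterlim. apply derivable_continuous_pt. apply derivable_pt_pow.
  apply cR_const.
Qed.

Lemma rint_abs_le (G K : R -> R) T : 0 <= T -> (forall t, continuous G t) -> (forall t, continuous K t) ->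
  (forall r, 0 <= r <= T -> Rabs (G r) <= K r) -> Rabs (RInt G 0 T) <= RInt K 0 T.
Proof.
  intros HT HG HK Hb. eapply Rle_trans. apply abs_RInt_le; auto. apply exR_cont; intros; auto.
  apply RInt_le; auto. apply exR_cont; intros. apply (cR_comp G Rabs); auto. apply cR_Rabs.
  apply exR_cont; intros; auto. intros r Hr. apply Hb. lra.
Qed.

Definition bnd (L c : R) (n : nat) (r : R) := c * (L * Rmax r 0) ^ (S n) / INR (fact (S n)).

Lemma bnd_cont L c n t : continuous (bnd L c n) t.
Proof.
  unfold bnd. apply cR_mult. apply cR_mult. apply cR_const.
  apply (cR_comp (fun r => L * Rmax r 0) (fun y => y ^ (S n))). apply cR_mult. apply cR_const. apply cR_Rmax.
  apply continuity_pt_filterlim. apply derivable_continuous_pt. apply derivable_pt_pow. apply cR_const.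
Qed.

Lemma bnd_mono L c n w r : 0 <= L -> 0 <= c -> w <= r -> bnd L c n w <= bnd L c n r.
Proof.
  intros HL Hc Hw. unfold bnd. unfold Rdiv. apply Rmult_le_compat_r. left; apply Rinv_0_lt_compat, INR_fact_lt_0.
  apply Rmult_le_compat_l; auto. apply pow_incr. split. apply Rmult_le_pos; auto. apply Rmax_r.
  apply Rmult_le_compat_l; auto. unfold Rmax. destruct (Rle_dec w 0); destruct (Rle_dec r 0); lra.
Qed.

Lemma FF_zero tl tu g d f beta r : MH tl tu g d f beta -> FF tl tu g d f beta (fun _ => 0) r = 0.
Proof.
  intros HM. pose proof (goodk_k _ _ _ _ _ _ HM) as Hk. unfold FF.
  assert (Hh0 : hh beta 0 = 0) by (unfold hh; rewrite Rmax_left by lra; ring).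
  rewrite Hh0. rewrite gk_const by auto. ring.
Qed.

Lemma pic_step tl tu g d f beta c Lh : MH tl tu g d f beta -> 0 <= Lh -> 0 <= c ->
  (forall a b, Rabs (hh beta a - hh beta b) <= Lh * Rabs (a - b)) ->
  forall n t, Rabs (pic tl tu g d f beta c (S n) t - pic tl tu g d f beta c n t) <= bnd (d + 3 * Lh) c n t.
Proof.
  intros HM HLh Hc Hl. pose proof HM as (Htl&Htu&Hg&Hd&_).
  assert (HLam : 0 <= d + 3 * Lh) by lra.
  induction n as [|n IH]; intros t.
  - simpl pic. unfold Phi. replace (c + RInt (FF tl tu g d f beta (fun _ => c)) 0 (Rmax t 0) - c)
      with (RInt (FF tl tu g d f beta (fun _ => c)) 0 (Rmax t 0)) by (symmetry; apply pm_R).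
    eapply Rle_trans. apply (rint_abs_le _ (fun _ => (d + 3 * Lh) * c)). apply Rmax_r.
    apply FF_cont; auto. intros; apply cR_const. intros; apply cR_const.
    intros r Hr. rewrite <- (Rminus_0_r (FF tl tu g d f beta (fun _ => c) r)).
    rewrite <- (FF_zero tl tu g d f beta r HM).
    apply FF_lip; auto. intros; apply cR_const. intros; apply cR_const.
    intros. rewrite Rminus_0_r. rewrite Rabs_right; lra.
    rewrite RIntR_const. unfold bnd. simpl. right. field.
  - change (pic tl tu g d f beta c (S (S n))) with (Phi tl tu g d f beta c (pic tl tu g d f beta c (S n))).
    change (pic tl tu g d f beta c (S n)) with (Phi tl tu g d f beta c (pic tl tu g d f beta c n)) at 2.
    unfold Phi.
    replace (c + RInt (FF tl tu g d f beta (pic tl tu g d f beta c (S n))) 0 (Rmax t 0) -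
      (c + RInt (FF tl tu g d f beta (pic tl tu g d f beta c n)) 0 (Rmax t 0)))
      with (RInt (fun r => FF tl tu g d f beta (pic tl tu g d f beta c (S n)) r - FF tl tu g d f beta (pic tl tu g d f beta c n) r) 0 (Rmax t 0)).
    2:{ rewrite RIntR_minus. req; ring. apply exR_cont; intros; apply FF_cont; auto; apply pic_cont; auto.
        apply exR_cont; intros; apply FF_cont; auto; apply pic_cont; auto. }
    eapply Rle_trans. apply (rint_abs_le _ (fun r => (d + 3 * Lh) * bnd (d + 3 * Lh) c n r)). apply Rmax_r.
    intros; apply cR_minus; apply FF_cont; auto; apply pic_cont; auto.
    intros; apply cR_mult. apply cR_const. apply bnd_cont.
    intros r Hr. apply FF_lip; auto. apply pic_cont; auto. apply pic_cont; auto.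
    unfold bnd. apply Rmult_le_pos. apply Rmult_le_pos; auto. apply pow_le. apply Rmult_le_pos; auto. apply Rmax_r.
    left; apply Rinv_0_lt_compat, INR_fact_lt_0.
    intros w Hw. eapply Rle_trans. apply IH. apply bnd_mono; auto.
    unfold bnd. rewrite poly_int by apply Rmax_r. right. reflexivity.
Qed.

Lemma exp_cauchy (x : R) : forall eps, 0 < eps -> exists N, forall n m, (N <= n)%nat -> (N <= m)%nat ->
  Rabs (sum_n_m (fun k => x ^ k / INR (fact k)) n m) < eps.
Proof.
  intros eps He.
  assert (Hc : Cauchy_series (fun k => scal (pow_n x k) (/ INR (fact k)))).
  { apply (@Cauchy_ex_series R_AbsRing R_CompleteNormedModule). exists (exp x). apply is_exp_Reals. }
  destruct (Hc (mkposreal eps He)) as [N HN]. exists N. intros n m Hn Hm.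
  specialize (HN n m Hn Hm). simpl in HN.
  assert (E : sum_n_m (fun k => x ^ k / INR (fact k)) n m = sum_n_m (fun k => scal (pow_n x k) (/ INR (fact k))) n m).
  { apply sum_n_m_ext_loc. intros k _. unfold scal; simpl. unfold mult; simpl. rewrite <- pow_n_pow. unfold Rdiv. reflexivity. }
  rewrite E. exact HN.
Qed.

Lemma sum_n_SmR (a : nat -> R) n m : (n <= S m)%nat -> sum_n_m a n (S m) = sum_n_m a n m + a (S m).
Proof. intros H. rewrite sum_n_Sm by auto. reflexivity. Qed.

Lemma sum_nn (a : nat -> R) n m : (forall k, 0 <= a k) -> 0 <= sum_n_m a n m.
Proof.
  intros Ha. destruct (Compare_dec.le_dec n m) as [H|H].
  - induction H as [|m2 H IH]. rewrite (sum_n_n a n). auto. rewrite sum_n_Sm by lia. unfold plus; simpl. specialize (Ha (S m2)). lra.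
  - rewrite sum_n_m_zero by lia. simpl. unfold zero; simpl. lra.
Qed.

Lemma pic_diff tl tu g d f beta c Lh T : MH tl tu g d f beta -> 0 <= Lh -> 0 <= c -> 0 <= T ->
  (forall a b, Rabs (hh beta a - hh beta b) <= Lh * Rabs (a - b)) ->
  forall n p t, t <= T -> Rabs (pic tl tu g d f beta c (n + p) t - pic tl tu g d f beta c n t) <=
     c * sum_n_m (fun k => ((d + 3 * Lh) * T) ^ k / INR (fact k)) (S n) (n + p).
Proof.
  intros HM HLh Hc HT Hl n p t Ht. pose proof HM as (Htl&Htu&Hg&Hd&_).
  induction p as [|p IH].
  - rewrite Nat.add_0_r. rewrite sum_n_m_zero by lia. simpl. unfold zero; simpl. rewrite Rminus_eq_0, Rabs_R0. lra.
  - replace (n + S p)%nat with (S (n + p)) by lia. rewrite sum_n_SmR by lia.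
    replace (pic tl tu g d f beta c (S (n + p)) t - pic tl tu g d f beta c n t) with
      ((pic tl tu g d f beta c (S (n + p)) t - pic tl tu g d f beta c (n + p) t) +
       (pic tl tu g d f beta c (n + p) t - pic tl tu g d f beta c n t)) by ring.
    eapply Rle_trans. apply Rabs_triang.
    pose proof (pic_step tl tu g d f beta c Lh HM HLh Hc Hl (n + p) t).
    assert (bnd (d + 3 * Lh) c (n + p) t <= c * (((d + 3 * Lh) * T) ^ S (n + p) / INR (fact (S (n + p))))).
    { unfold bnd. unfold Rdiv. rewrite Rmult_assoc. apply Rmult_le_compat_l; auto.
      apply Rmult_le_compat_r. left; apply Rinv_0_lt_compat, INR_fact_lt_0.
      apply pow_incr. split. apply Rmult_le_pos. lra. apply Rmax_r.
      apply Rmult_le_compat_l. lra. unfold Rmax; destruct (Rle_dec t 0); lra. }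
    lra.
Qed.

Lemma unif_cauchy tl tu g d f beta c Lh T : MH tl tu g d f beta -> 0 <= Lh -> 0 <= c -> 0 <= T ->
  (forall a b, Rabs (hh beta a - hh beta b) <= Lh * Rabs (a - b)) ->
  forall eps, 0 < eps -> exists N, forall n p t, (N <= n)%nat -> t <= T ->
    Rabs (pic tl tu g d f beta c (n + p) t - pic tl tu g d f beta c n t) < eps.
Proof.
  intros HM HLh Hc HT Hl eps He.
  destruct (exp_cauchy ((d + 3 * Lh) * T) (eps / (c + 1))) as [N HN].
  apply Rdiv_lt_0_compat; lra.
  exists N. intros n p t Hn Ht.
  eapply Rle_lt_trans. apply (pic_diff tl tu g d f beta c Lh T); auto.
  specialize (HN (S n) (n + p)%nat ltac:(lia) ltac:(lia)).
  assert (Hs := sum_nn (fun k => ((d + 3 * Lh) * T) ^ k / INR (fact k)) (S n) (n + p)).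
  assert (Hs' : 0 <= sum_n_m (fun k => ((d + 3 * Lh) * T) ^ k / INR (fact k)) (S n) (n + p)).
  { apply Hs. intros k. unfold Rdiv. apply Rmult_le_pos. apply pow_le. pose proof HM as (_&_&_&Hd&_).
    apply Rmult_le_pos; lra. left; apply Rinv_0_lt_compat, INR_fact_lt_0. }
  rewrite Rabs_right in HN by lra.
  apply Rle_lt_trans with ((c + 1) * sum_n_m (fun k => ((d + 3 * Lh) * T) ^ k / INR (fact k)) (S n) (n + p)).
  apply Rmult_le_compat_r; lra.
  apply Rlt_le_trans with ((c + 1) * (eps / (c + 1))). apply Rmult_lt_compat_l; lra. right; field; lra.
Qed.

Definition xs tl tu g d f beta c t := real (Lim_seq (fun n => pic tl tu g d f beta c n t)).

Definition EH tl tu g d f beta c Lh := MH tl tu g d f beta /\ 0 <= Lh /\ 0 <= c /\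
  (forall a b, Rabs (hh beta a - hh beta b) <= Lh * Rabs (a - b)).

Lemma xs_lim tl tu g d f beta c Lh : EH tl tu g d f beta c Lh ->
  forall t, is_lim_seq (fun n => pic tl tu g d f beta c n t) (xs tl tu g d f beta c t).
Proof.
  intros (HM&HLh&Hc&Hl) t.
  assert (Hcy : ex_lim_seq_cauchy (fun n => pic tl tu g d f beta c n t)).
  { intros eps. destruct (unif_cauchy tl tu g d f beta c Lh (Rmax t 0) HM HLh Hc (Rmax_r t 0) Hl eps (cond_pos eps)) as [N HN].
    exists N. intros n m Hn Hm. destruct (Nat.le_gt_cases n m) as [H|H].
    - replace m with (n + (m - n))%nat by lia. rewrite Rabs_minus_sym. apply HN; auto. apply Rmax_l.
    - replace n with (m + (n - m))%nat by lia. apply HN; auto. apply Rmax_l. }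
  apply ex_lim_seq_cauchy_corr in Hcy. apply ex_finite_lim_seq_correct in Hcy. destruct Hcy as [He Hf].
  unfold xs. rewrite Hf. apply Lim_seq_correct; auto.
Qed.

Lemma xs_approx tl tu g d f beta c Lh T : EH tl tu g d f beta c Lh -> 0 <= T ->
  forall eps, 0 < eps -> exists N, forall n t, (N <= n)%nat -> t <= T ->
    Rabs (xs tl tu g d f beta c t - pic tl tu g d f beta c n t) <= eps.
Proof.
  intros HE HT eps He. pose proof HE as (HM&HLh&Hc&Hl).
  destruct (unif_cauchy tl tu g d f beta c Lh T HM HLh Hc HT Hl (eps / 2)) as [N HN]. lra.
  exists N. intros n t Hn Ht.
  pose proof (proj2 (is_lim_seq_spec _ _) (xs_lim _ _ _ _ _ _ _ _ HE t) (mkposreal (eps / 2) ltac:(lra))) as [N' HN'].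
  set (m := (n + N')%nat).
  specialize (HN' m ltac:(unfold m; lia)). simpl in HN'.
  specialize (HN n N' t Hn Ht). fold m in HN.
  replace (xs tl tu g d f beta c t - pic tl tu g d f beta c n t) with
    (- (pic tl tu g d f beta c m t - xs tl tu g d f beta c t) + (pic tl tu g d f beta c m t - pic tl tu g d f beta c n t)) by ring.
  eapply Rle_trans. apply Rabs_triang. rewrite Rabs_Ropp. lra.
Qed.

Lemma xs_cont tl tu g d f beta c Lh : EH tl tu g d f beta c Lh -> forall t0, continuous (xs tl tu g d f beta c) t0.
Proof.
  intros HE t0. pose proof HE as (HM&HLh&Hc&Hl). apply filterlim_locally. intros eps.
  pose proof (cond_pos eps) as He.
  destruct (xs_approx tl tu g d f beta c Lh (Rmax t0 0 + 1) HE ltac:(pose proof (Rmax_r t0 0); lra) (eps / 3) ltac:(lra)) as [N HN].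
  destruct (proj1 (filterlim_locally _ _) (pic_cont tl tu g d f beta c N HM t0) (mkposreal (eps / 3) ltac:(lra))) as [del Hdel].
  assert (Hp : 0 < Rmin del 1) by (apply Rmin_pos; [apply cond_pos|lra]).
  exists (mkposreal _ Hp). intros t Ht. pose proof (proj1 (ballR _ _ _) Ht) as Ht2. simpl in Ht2.
  pose proof (Rmin_l del 1). pose proof (Rmin_r del 1). pose proof (Rmax_l t0 0).
  apply ballR.
  assert (Hb1 : ball t0 del t) by (apply ballR; lra).
  specialize (Hdel t Hb1). pose proof (proj1 (ballR _ _ _) Hdel) as Hd2. simpl in Hd2.
  pose proof (HN N t (le_n N) ltac:(apply Rabs_def2 in Ht2; lra)).
  pose proof (HN N t0 (le_n N) ltac:(lra)).
  replace (xs tl tu g d f beta c t - xs tl tu g d f beta c t0) with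
    ((xs tl tu g d f beta c t - pic tl tu g d f beta c N t) + (pic tl tu g d f beta c N t - pic tl tu g d f beta c N t0)
     - (xs tl tu g d f beta c t0 - pic tl tu g d f beta c N t0)) by ring.
  eapply Rle_lt_trans. apply Rabs_triang. rewrite Rabs_Ropp.
  eapply Rle_lt_trans. apply Rplus_le_compat_r. apply Rabs_triang. lra.
Qed.

Lemma pic_neg tl tu g d f beta c n t : t <= 0 -> pic tl tu g d f beta c n t = c.
Proof.
  intros Ht. destruct n; simpl. auto. unfold Phi. rewrite Rmax_right by lra. rewrite RIntR_point. ring.
Qed.

Lemma xs_neg tl tu g d f beta c t : t <= 0 -> xs tl tu g d f beta c t = c.
Proof.
  intros Ht. unfold xs. rewrite (Lim_seq_ext _ (fun _ => c)). rewrite Lim_seq_const. reflexivity.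
  intros n. apply pic_neg; auto.
Qed.

Lemma zero_of_small (D K : R) : 0 <= K -> (forall eps, 0 < eps -> Rabs D <= eps * K) -> D = 0.
Proof.
  intros HK H. destruct (Req_dec D 0) as [|Hn]; auto. exfalso.
  assert (HD : 0 < Rabs D) by (apply Rabs_pos_lt; auto).
  specialize (H (Rabs D / (2 * (K + 1))) ltac:(apply Rdiv_lt_0_compat; lra)).
  assert (Rabs D / (2 * (K + 1)) * K < Rabs D).
  { apply Rle_lt_trans with (Rabs D / (2 * (K + 1)) * (K + 1)). apply Rmult_le_compat_l.
    left; apply Rdiv_lt_0_compat; lra. lra. replace (Rabs D / (2 * (K + 1)) * (K + 1)) with (Rabs D / 2) by (field; lra). lra. }
  lra.
Qed.

Lemma xs_int tl tu g d f beta c Lh : EH tl tu g d f beta c Lh -> forall t, 0 <= t ->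
  xs tl tu g d f beta c t = c + RInt (FF tl tu g d f beta (xs tl tu g d f beta c)) 0 t.
Proof.
  intros HE t Ht. pose proof HE as (HM&HLh&Hc&Hl). pose proof HM as (Htl&Htu&Hg&Hd&_).
  assert (Hxc := xs_cont _ _ _ _ _ _ _ _ HE).
  apply Rminus_diag_uniq. apply (zero_of_small _ (1 + t * (d + 3 * Lh))).
  { assert (0 <= t * (d + 3 * Lh)) by (apply Rmult_le_pos; lra). lra. }
  intros eps He.
  destruct (xs_approx tl tu g d f beta c Lh t HE Ht eps He) as [N HN].
  pose proof (HN (S N) t ltac:(lia) (Rle_refl t)) as H1.
  assert (Hp : pic tl tu g d f beta c (S N) t = c + RInt (FF tl tu g d f beta (pic tl tu g d f beta c N)) 0 t).
  { simpl. unfold Phi. rewrite Rmax_left by lra. reflexivity. }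
  assert (H2 : Rabs (RInt (FF tl tu g d f beta (pic tl tu g d f beta c N)) 0 t - RInt (FF tl tu g d f beta (xs tl tu g d f beta c)) 0 t)
     <= t * ((d + 3 * Lh) * eps)).
  { rewrite <- RIntR_minus. 2,3: apply exR_cont; intros; apply FF_cont; auto; apply pic_cont; auto.
    eapply Rle_trans. apply (rint_abs_le _ (fun _ => (d + 3 * Lh) * eps)); auto.
    intros; apply cR_minus; apply FF_cont; auto. apply pic_cont; auto. intros; apply cR_const.
    intros r Hr. apply FF_lip; auto. apply pic_cont; auto. lra. intros w Hw.
    rewrite Rabs_minus_sym. apply HN; auto. lra.
    rewrite RIntR_const. right; ring. }
  rewrite Hp in H1.
  replace (xs tl tu g d f beta c t - (c + RInt (FF tl tu g d f beta (xs tl tu g d f beta c)) 0 t)) with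
    ((xs tl tu g d f beta c t - (c + RInt (FF tl tu g d f beta (pic tl tu g d f beta c N)) 0 t)) +
     (RInt (FF tl tu g d f beta (pic tl tu g d f beta c N)) 0 t - RInt (FF tl tu g d f beta (xs tl tu g d f beta c)) 0 t)) by ring.
  eapply Rle_trans. apply Rabs_triang. lra.
Qed.

Lemma xs_der tl tu g d f beta c Lh : EH tl tu g d f beta c Lh -> forall t, 0 < t ->
  is_derive (xs tl tu g d f beta c) t (FF tl tu g d f beta (xs tl tu g d f beta c) t).
Proof.
  intros HE t Ht. pose proof HE as (HM&HLh&Hc&Hl).
  assert (Hxc := xs_cont _ _ _ _ _ _ _ _ HE).
  apply (is_derive_ext_loc (fun u => c + RInt (FF tl tu g d f beta (xs tl tu g d f beta c)) 0 u)).
  - exists (mkposreal t Ht). intros y Hy. pose proof (proj1 (ballR _ _ _) Hy) as Hy2. simpl in Hy2.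
    apply Rabs_def2 in Hy2. rewrite (xs_int _ _ _ _ _ _ _ Lh) by (auto; lra). reflexivity.
  - eapply dR_eq. apply dR_plus. apply dR_const. apply RInt_up_der. apply FF_cont; auto. req; ring.
Qed.

Lemma FF_nonneg tl tu g d f beta u r : MH tl tu g d f beta -> (forall t, continuous u t) -> u r <= 0 ->
  0 <= FF tl tu g d f beta u r.
Proof.
  intros HM Hu Hr. pose proof HM as (Htl&Htu&Hg&Hd&_&Hbp&Hb&Hbd).
  unfold FF. assert (Hh : hh beta (u r) = 0) by (unfold hh; rewrite Rmax_right by lra; ring).
  rewrite Hh.
  assert (0 <= RInt (fun s => kk g f s * hh beta (u (r - s))) tl tu).
  { apply gk_ge0. apply (goodk_k _ _ _ d _ beta); auto. lra.
    intros t. apply (cR_comp (fun s => u (r - s)) (hh beta)). apply cshift; auto. apply hh_cont; auto.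
    intros; apply hh_ge0; auto. }
  assert (0 <= - d * u r) by nra. lra.
Qed.

Lemma xs_pos tl tu g d f beta c Lh : EH tl tu g d f beta c Lh -> 0 < c -> forall t, 0 <= xs tl tu g d f beta c t.
Proof.
  intros HE Hc0 t. pose proof HE as (HM&HLh&Hc&Hl).
  assert (Hxc := xs_cont _ _ _ _ _ _ _ _ HE).
  set (x := xs tl tu g d f beta c).
  destruct (Rle_dec 0 (x t)) as [|Hneg]; auto. exfalso. apply Rnot_le_lt in Hneg.
  assert (Ht : 0 < t).
  { destruct (Rle_lt_dec t 0); auto. unfold x in Hneg. rewrite xs_neg in Hneg; lra. }
  set (Ev := fun s => 0 <= s <= t /\ 0 <= x s).
  assert (Hx0 : x 0 = c) by (unfold x; apply xs_neg; lra).
  destruct (completeness Ev) as [m [Hub Hlub]].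
  { exists t. intros s [Hs _]. lra. }
  { exists 0. split. lra. lra. }
  assert (Hm0 : 0 <= m) by (apply Hub; split; lra).
  assert (Hmt : m <= t) by (apply Hlub; intros s [Hs _]; lra).
  assert (Hxm : 0 <= x m).
  { destruct (Rle_dec 0 (x m)) as [|Hn]; auto. exfalso. apply Rnot_le_lt in Hn.
    destruct (proj1 (filterlim_locally _ _) (Hxc m) (mkposreal (- x m) ltac:(lra))) as [del Hdel].
    assert (Hd := cond_pos del).
    assert (Hup : is_upper_bound Ev (m - del / 2)).
    { intros s [Hs1 Hs2]. destruct (Rle_dec s (m - del / 2)); auto. exfalso.
      assert (s <= m) by (apply Hub; split; auto).
      assert (Hb : ball m del s) by (apply ballR; apply Rabs_def1; lra).
      specialize (Hdel s Hb). pose proof (proj1 (ballR _ _ _) Hdel) as Hd2. simpl in Hd2.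
      apply Rabs_def2 in Hd2. fold x in Hd2. lra. }
    specialize (Hlub _ Hup). lra. }
  assert (Hmt' : m < t) by (destruct (Req_dec m t) as [Heq|Heq]; [rewrite Heq in Hxm; lra|lra]).
  assert (Hneg' : forall u, m < u <= t -> x u < 0).
  { intros u Hu. destruct (Rle_dec 0 (x u)) as [Hp|Hp]. assert (u <= m) by (apply Hub; split; [lra|auto]). lra. lra. }
  assert (Hmono : - x t <= - x m).
  { apply (mono_dec (fun u => - x u)). lra. intros; apply cR_opp; apply Hxc.
    intros u Hu. exists (- FF tl tu g d f beta x u). split.
    apply (is_derive_opp x u). apply (xs_der _ _ _ _ _ _ _ Lh); auto. lra.
    assert (0 <= FF tl tu g d f beta x u). { apply FF_nonneg; auto. left; apply Hneg'; lra. } lra. }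
  lra.
Qed.

Lemma xs_XS tl tu g d f beta c Lh : EH tl tu g d f beta c Lh -> 0 < c -> XS tl tu g d f beta (xs tl tu g d f beta c).
Proof.
  intros HE Hc0. pose proof HE as (HM&HLh&Hc&Hl). pose proof HM as (Htl&Htu&Hg&Hd&_&Hbp&Hb&Hbd).
  assert (Hxc := xs_cont _ _ _ _ _ _ _ _ HE). assert (Hp := xs_pos _ _ _ _ _ _ _ _ HE Hc0).
  split; [|split].
  - intros; apply Hp.
  - intros t _. apply cont_within. apply Hxc.
  - intros t Ht. eapply dR_eq. apply (xs_der _ _ _ _ _ _ _ Lh); auto.
    unfold FF, delayed_term. rewrite (RIntR_ext (fun s => exp (- g * s) * f s * (beta (xs tl tu g d f beta c (t - s)) * xs tl tu g d f beta c (t - s)))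
       (fun s => kk g f s * hh beta (xs tl tu g d f beta c (t - s)))).
    rewrite hh_pos by apply Hp. req; ring.
    intros s _. unfold kk. rewrite hh_pos by apply Hp. ring.
Qed.

Definition ys tl tu g d f beta c t := Yh tl tu g f beta (xs tl tu g d f beta c) (Rmax t 0).

Lemma sol_exists tl tu g d f beta c Lh : EH tl tu g d f beta c Lh -> 0 < c ->
  is_solution tl tu g d f beta (xs tl tu g d f beta c) (ys tl tu g d f beta c).
Proof.
  intros HE Hc0. pose proof HE as (HM&HLh&Hc&Hl). pose proof HM as (Htl&Htu&Hg&Hd&_&Hbp&Hb&Hbd).
  assert (HX := xs_XS _ _ _ _ _ _ _ _ HE Hc0). pose proof HX as (Hx0&Hxw&Hxd).
  set (x := xs tl tu g d f beta c) in *.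
  assert (Hq := qf_cont beta x tu Hb Hxw).
  assert (HYc : forall t, continuous (Yh tl tu g f beta x) t).
  { intros t. apply (der_cont _ _ _ (Yh_der tl tu g d f beta x HM Hq t)). }
  assert (Hyc : forall t, continuous (ys tl tu g d f beta c) t).
  { intros t. unfold ys. apply (cR_comp (fun t => Rmax t 0) (Yh tl tu g f beta x)). apply cR_Rmax. apply HYc. }
  split; [|split; [|split; [|split; [|split; [|split]]]]]; auto.
  - intros t Ht. unfold ys. destruct (xc_bound x tu (Rmax t 0 - tu) (Rmax t 0) Hxw) as [Q [HQ HQb]]. lra.
    apply (Yh_bounds tl tu g d f beta x (Rmax t 0) Q); auto.
  - intros t _. apply cont_within. apply Hyc.
  - intros t Ht. apply (is_derive_ext_loc (Yh tl tu g f beta x)).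
    + exists (mkposreal t Ht). intros u Hu. pose proof (proj1 (ballR _ _ _) Hu) as Hu2. simpl in Hu2.
      apply Rabs_def2 in Hu2. unfold ys. rewrite Rmax_left by lra. reflexivity.
    + eapply dR_eq. apply (Yh_der tl tu g d f beta x HM Hq t).
      unfold ys. rewrite Rmax_left by lra. rewrite (delayed_eq tl tu g d f beta x t) by (auto; lra).
      unfold qf. rewrite xc_eq by lra. rewrite hh_pos by (apply Hx0; lra). unfold x; req; ring.
  - intros t Ht. unfold ys. rewrite Rmax_left by lra. symmetry. apply (y_formula_eq tl tu g d f beta x t); auto. lra.
Qed.

Lemma unstable_thm tl tu g d f beta : MH tl tu g d f beta ->
  (exists L, forall u v, 0 <= u -> 0 <= v -> Rabs (u * beta u - v * beta v) <= L * Rabs (u - v)) ->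
  d < (2 * Kc tl tu g f - 1) * beta 0 -> E0_unstable tl tu g d f beta.
Proof.
  intros HM [L HL] Hcond Hst. pose proof HM as (Htl&Htu&Hg&Hd&_&Hbp&Hb&Hbd).
  assert (Hb0 := Hbp 0 (Rle_refl 0)).
  set (Lh := Rmax L 0 + 1).
  assert (HLh : 0 <= Lh) by (unfold Lh; pose proof (Rmax_r L 0); lra).
  assert (Hl := hh_lip beta L HL).
  set (k1 := 2 * Kc tl tu g f - 1).
  assert (Hk1 : 0 < k1).
  { unfold k1. destruct (Rle_lt_dec (2 * Kc tl tu g f - 1) 0); auto.
    assert ((2 * Kc tl tu g f - 1) * beta 0 <= 0) by (apply Rmult_le_0_r; lra). lra. }
  set (c1 := (k1 * beta 0 - d) / 2).
  assert (Hc1 : 0 < c1) by (unfold c1; fold k1 in Hcond; lra).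
  destruct (proj1 (filterlim_locally _ _) (Hb 0 (Rle_refl 0)) (mkposreal (c1 / k1) ltac:(apply Rdiv_lt_0_compat; lra))) as [rho Hrho].
  assert (Hrho0 := cond_pos rho).
  set (eps0 := Rmin (rho / 2) 1).
  assert (He0 : 0 < eps0) by (unfold eps0; apply Rmin_pos; lra).
  assert (Hbeta : forall v, 0 <= v <= eps0 -> c1 <= k1 * beta v - d).
  { intros v Hv. assert (Hvb : ball 0 rho v).
    { apply ballR. pose proof (Rmin_l (rho / 2) 1). rewrite Rminus_0_r. unfold eps0 in Hv. rewrite Rabs_right; lra. }
    specialize (Hrho v Hvb (proj1 Hv)). pose proof (proj1 (ballR _ _ _) Hrho) as Hr2. simpl in Hr2.
    apply Rabs_def2 in Hr2.
    assert (k1 * (beta 0 - c1 / k1) <= k1 * beta v) by (apply Rmult_le_compat_l; lra).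
    replace (k1 * (beta 0 - c1 / k1)) with (k1 * beta 0 - c1) in H by (field; lra).
    unfold c1 in *. lra. }
  destruct (Hst eps0 He0) as [eta [Heta Hstab]].
  set (C1 := 1 + 2 * (tu * beta 0)).
  assert (Htb : 0 <= tu * beta 0) by (apply Rmult_le_pos; lra).
  assert (HC1 : 1 <= C1) by (unfold C1; lra).
  set (c := Rmin eta eps0 / (2 * (C1 + 1))).
  assert (Hmin : 0 < Rmin eta eps0) by (apply Rmin_pos; lra).
  assert (Hc0 : 0 < c) by (unfold c; apply Rdiv_lt_0_compat; lra).
  assert (HcC : c * (2 * (C1 + 1)) = Rmin eta eps0) by (unfold c; field; lra).
  assert (Hc_eta : C1 * c < eta).
  { pose proof (Rmin_l eta eps0). nra. }
  assert (Hc_eps : C1 * c < eps0).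
  { pose proof (Rmin_r eta eps0). nra. }
  assert (Hcc : c <= C1 * c) by (rewrite <- (Rmult_1_l c) at 1; apply Rmult_le_compat_r; lra).
  assert (HE : EH tl tu g d f beta c Lh) by (split; [exact HM|split; [exact HLh|split; [lra|exact Hl]]]).
  pose proof (sol_exists _ _ _ _ _ _ _ _ HE Hc0) as Hsol.
  set (x := xs tl tu g d f beta c) in *. set (y := ys tl tu g d f beta c) in *.
  pose proof (sol_XS _ _ _ _ _ _ _ _ Hsol) as HX. pose proof HX as (Hx0&Hxw&Hxd).
  assert (Hxneg : forall r, r <= 0 -> x r = c) by (intros; unfold x; apply xs_neg; auto).
  assert (Hxcneg : forall r, r <= 0 -> xc x tu r = c).
  { intros r Hr. unfold xc. apply Hxneg. unfold Rmax. destruct (Rle_dec r (- tu)); lra. }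
  assert (Hinit : forall s, - tu <= s <= 0 -> Rabs (x s) < eta /\ Rabs (y s) < eta).
  { intros s Hs. split.
    - rewrite Hxneg by lra. rewrite Rabs_right by lra. lra.
    - unfold y, ys. rewrite Rmax_right by lra. fold x.
      assert (HB : 0 <= Yh tl tu g f beta x 0 <= tu * (beta 0 * c)).
      { apply (Yh_bounds tl tu g d f beta x 0 c); auto. lra. intros r Hr. rewrite Hxcneg by lra. lra. }
      rewrite Rabs_right by lra. unfold C1 in Hc_eta. nra. }
  specialize (Hstab x y Hsol Hinit).
  assert (Hxall : forall r, xc x tu r <= eps0).
  { intros r. destruct (Rle_lt_dec r 0). rewrite Hxcneg by auto. lra.
    rewrite xc_eq by lra. destruct (Hstab r ltac:(lra)) as [H1 _]. apply Rabs_def2 in H1. lra. }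
  assert (Hder : forall u, 0 < u -> exists l, is_derive (fun t => - W tl tu g f beta x t) u l /\ l <= - c1 * x u).
  { intros u Hu. exists (- (x u * (k1 * beta (x u) - d))). split.
    apply (is_derive_opp (W tl tu g f beta x) u). apply W_der; auto.
    assert (Hxu : 0 <= x u <= eps0) by (split; [apply Hx0; lra| rewrite <- (xc_eq x tu u) by lra; apply Hxall]).
    specialize (Hbeta (x u) Hxu). assert (c1 * x u <= x u * (k1 * beta (x u) - d)) by nra. lra. }
  assert (HWc : forall t, continuous (fun t => - W tl tu g f beta x t) t).
  { intros t. apply cR_opp. apply (W_cont _ _ _ d); auto. }
  assert (HWmono : forall t1 t2, 0 <= t1 <= t2 -> W tl tu g f beta x t1 <= W tl tu g f beta x t2).
  { intros t1 t2 Ht. assert (- W tl tu g f beta x t2 <= - W tl tu g f beta x t1).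
    { apply (mono_dec (fun t => - W tl tu g f beta x t)). lra. intros; apply HWc.
      intros u Hu. destruct (Hder u ltac:(lra)) as [l [Hl1 Hl2]]. exists l. split; auto.
      assert (0 <= c1 * x u) by (apply Rmult_le_pos; [lra|apply Hx0; lra]). lra. }
    lra. }
  assert (HWup : forall t, W tl tu g f beta x t <= C1 * eps0).
  { intros t. assert (HB : xc x tu t <= W tl tu g f beta x t <= xc x tu t + 2 * (tu * (beta 0 * eps0))).
    { apply (W_bounds tl tu g d f beta x t eps0); auto. all: try lra. all: intros; apply Hxall. }
    pose proof (Hxall t). unfold C1.
    assert (tu * (beta 0 * eps0) = tu * beta 0 * eps0) by ring. lra. }
  assert (Hlim : forall eps, 0 < eps -> exists T, forall t, T <= t -> x t < eps).
  { apply (barb x (fun t => - W tl tu g f beta x t) c1 (C1 * eps0) ((d + beta 0) * eps0 + 2 * (beta 0 * eps0))); auto.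
    - assert (0 <= (d + beta 0) * eps0) by (apply Rmult_le_pos; lra).
      assert (0 <= beta 0 * eps0) by (apply Rmult_le_pos; lra). lra.
    - intros t Ht. apply Hx0. lra.
    - intros t Ht. apply (der_cont x t _ (Hxd t Ht)).
    - intros s t Hs' Ht. apply (x_lip tl tu g d f beta x eps0); auto.
    - intros t1 t2 Ht. apply (int_decay tl tu g d f beta x (fun t => - W tl tu g f beta x t) c1); auto.
    - intros t Ht. pose proof (W_lower tl tu g d f beta x 1 HM Hxw Hx0). pose proof (xc_ge0 x tu 1 Hx0).
      pose proof (HWup t). lra. }
  set (e := c / (2 * C1)).
  assert (He : 0 < e) by (unfold e; apply Rdiv_lt_0_compat; lra).
  destruct (Hlim e He) as [T HT].
  set (ts := Rmax T 0 + tu).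
  pose proof (Rmax_l T 0). pose proof (Rmax_r T 0).
  assert (HW1 : W tl tu g f beta x ts <= C1 * e).
  { assert (HB : xc x tu ts <= W tl tu g f beta x ts <= xc x tu ts + 2 * (tu * (beta 0 * e))).
    { apply (W_bounds tl tu g d f beta x ts e); auto. lra.
      intros r Hr. rewrite xc_eq by (unfold ts in Hr; lra). left. apply HT. unfold ts in Hr. lra. }
    assert (tu * (beta 0 * e) = tu * beta 0 * e) by ring.
    assert (xc x tu ts <= e) by (rewrite xc_eq by (unfold ts; lra); left; apply HT; unfold ts; lra).
    unfold C1. lra. }
  assert (HW2 : c <= W tl tu g f beta x ts).
  { apply Rle_trans with (W tl tu g f beta x 0). 2: (apply HWmono; unfold ts; lra).
    rewrite <- (Hxcneg 0) by lra. apply (W_lower tl tu g d f beta); auto. }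
  assert (C1 * e = c / 2) by (unfold e; field; lra).
  lra.
Qed.

Lemma final tl tu g d f beta
  (Htl : 0 <= tl) (Htlu : tl < tu) (Hg : 0 <= g) (Hd : 0 <= d)
  (Hf : pc_density f tl tu)
  (Hbpos : forall u, 0 <= u -> 0 < beta u)
  (Hbcont : forall u, 0 <= u ->
     filterlim beta (within (fun s => 0 <= s) (locally u)) (locally (beta u)))
  (Hbdec : forall u v, 0 <= u -> u <= v -> beta v <= beta u)
  (Hblip : exists L, forall u v, 0 <= u -> 0 <= v ->
     Rabs (u * beta u - v * beta v) <= L * Rabs (u - v)) :
  ((2 * RInt (fun s => exp (- g * s) * f s) tl tu - 1) * beta 0 < d ->
     E0_GAS tl tu g d f beta) /\
  (d < (2 * RInt (fun s => exp (- g * s) * f s) tl tu - 1) * beta 0 ->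
     E0_unstable tl tu g d f beta).
Proof.
  assert (HM : MH tl tu g d f beta) by (split; [|split; [|split; [|split; [|split; [|split; [|split]]]]]]; assumption).
  split.
  - intros H. apply gas_thm; auto.
  - intros H. apply unstable_thm; auto.
Qed.

Theorem theorem3p1 (tl tu g d : R) (f beta : R -> R)
  (Htl : 0 <= tl) (Htlu : tl < tu) (Hg : 0 <= g) (Hd : 0 <= d)
  (Hf : pc_density f tl tu)
  (Hbpos : forall u, 0 <= u -> 0 < beta u)
  (Hbcont : forall u, 0 <= u ->
     filterlim beta (within (fun s => 0 <= s) (locally u)) (locally (beta u)))
  (Hbdec : forall u v, 0 <= u -> u <= v -> beta v <= beta u)
  (Hblim : is_lim beta p_infty 0)
  (Hblip : exists L, forall u v, 0 <= u -> 0 <= v ->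
     Rabs (u * beta u - v * beta v) <= L * Rabs (u - v)) :
  ((2 * RInt (fun s => exp (- g * s) * f s) tl tu - 1) * beta 0 < d ->
     E0_GAS tl tu g d f beta) /\
  (d < (2 * RInt (fun s => exp (- g * s) * f s) tl tu - 1) * beta 0 ->
     E0_unstable tl tu g d f beta).
Proof.
  exact (final tl tu g d f beta Htl Htlu Hg Hd Hf Hbpos Hbcont Hbdec Hblip).
Qed.
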